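(* Let $B>0$, $T\ge 2$, and let $\mathcal F$ be the set of all $1$-Lipschitz functions from $[0,1]$ to $[-B,B]$. Let $(x_t)$ be any sequence in $[0,1]$ and $(y_t)$ any real sequence with $\max_{1\le t\le T}|y_t|\le B$. Then the Dyadic Chaining Algorithm (described in the context) tuned with $\gamma=BT^{-1/3}$ and $M=\lceil\log_2(\gamma T/B)\rceil$ satisfies, for some absolute constant $c>0$, $$\sum_{t=1}^T(y_t-\hat y_t)^2-\inf_{f\in\mathcal F}\sum_{t=1}^T(y_t-f(x_t))^2\le c\max\{B,B^2\}\,T^{1/3}\log T.$$
   Context: Online protocol: at round $t$, $x_t$ is revealed, the forecaster predicts $\hat y_t$, then $y_t$ is revealed. Adaptive Multi-variable Exponentiated Gradient (AMEG) on $\Delta_{N_1}\times\cdots\times\Delta_{N_K}$ ($\Delta_N$ the probability simplex of $\mathbb R^N$) with gradient bounds $G^{(1)},\ldots,G^{(K)}>0$: start with uniform $\hat{\boldsymbol u}^{(k)}_1$; at each of its rounds $t$ it outputs $(\hat{\boldsymbol u}^{(k)}_t)_k$, receives a differentiable jointly convex loss $\ell_t$, sets $\eta^{(k)}_{t+1}=\frac{1}{G^{(k)}}\sqrt{\log N_k/(1+\sum_{s=1}^t\mathbb 1\{\sup|\nabla_{\boldsymbol u^{(k)}}\ell_s|>0\})}$ (sup of the absolute coordinates of the partial gradient over the whole domain) and $\hat u^{(k)}_{t+1,i}\propto\exp\big(-\eta^{(k)}_{t+1}\sum_{s=1}^t\partial_{u^{(k)}_i}\ell_s(\hat{\boldsymbol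 u}^{(1)}_s,\ldots,\hat{\boldsymbol u}^{(K)}_s)\big)$, normalized over $i$. Dyadic Chaining Algorithm: assume $1/\gamma$ and $2B/\gamma$ are integers. Let $I_a=[(a-1)\gamma,a\gamma)$, $a=1,\ldots,1/\gamma$ (the last one closed at $1$). For $m\ge1$, split $I_a$ into $2^m$ consecutive subintervals $I_a^{(m,n)}$, $n=1,\ldots,2^m$, of length $\gamma/2^m$. For each $a$ run an independent instance $\mathcal A_a$ that is fed only rounds $t$ with $x_t\in I_a$. Inside $\mathcal A_a$, for each $j\in\{0,\ldots,2B/\gamma\}$ run an AMEG instance $\mathcal B_{a,j}$ with blocks indexed by $(m,n)$, $1\le m\le M$, $1\le n\le 2^m$, each block $\boldsymbol u^{(m,n)}\in\Delta_2$, gradient bounds $G^{(m,n)}=16B\gamma/2^m$, and losses $$\ell_t(\boldsymbol u)=\Big(y_t-(-B+j\gamma)-\sum_{m=1}^M\sum_{n=1}^{2^m}\Big(u^{(m,n)}_1\tfrac{-\gamma}{2^{m-1}}+u^{(m,n)}_2\tfrac{\gamma}{2^{m-1}}\Big)\mathbb 1\{x_t\in I_a^{(m,n)}\}\Big)^2.$$ With its current weights $\hat{\boldsymbol u}^{(m,n)}_{t,a,j}$, let $\hat f_{t,a,j}(x)=-B+j\gamma+\sum_{m,n}\big(\hat u^{(m,n)}_{t,a,j,1}\frac{-\gamma}{2^{m-1}}+\hat u^{(m,n)}_{t,a,j,2}\frac{\gamma}{2^{m-1}}\big)\mathbb 1\{x\in I_a^{(m,n)}\}$. Aggregate them by exponential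 weights $\hat w_{t,a,j}\propto\exp\big(-\eta\sum_{s<t,\,x_s\in I_a}(y_s-\hat f_{s,a,j}(x_s))^2\big)$ with $\eta=1/(32B^2)$, giving $\hat f_{t,a}=\sum_j\hat w_{t,a,j}\hat f_{t,a,j}$. The prediction is $\hat y_t=\sum_a\hat f_{t,a}(x_t)\mathbb 1\{x_t\in I_a\}$. *)

(* Defs.v *)
From Stdlib Require Import Reals Lra Lia List ClassicalEpsilon.
From Coquelicot Require Import Coquelicot.
Import ListNotations.
Open Scope R_scope.

Definition lsum (l : list nat) (f : nat -> R) : R :=
  fold_right (fun k acc => f k + acc) 0 l.

Definition ind (P : Prop) : R :=
  if excluded_middle_informative P then 1 else 0.

(* A point of the product of simplices: u m n i, block (m,n), coordinate i in {1,2} *)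
Definition point := nat -> nat -> nat -> R.

Definition upd (u : point) (m n i : nat) (v : R) : point :=
  fun m' n' i' =>
    if (Nat.eqb m' m && Nat.eqb n' n && Nat.eqb i' i)%bool then v else u m' n' i'.

Section DyadicChaining.
(* B : range bound; gamma : width of the I_a; M : depth;
   NA = 1/gamma (number of intervals I_a); NJ = 2B/gamma (experts j = 0..NJ);
   x, y : the data sequences (rounds t = 1, 2, ...). *)
Variables (B gamma : R) (M NA NJ : nat) (x y : nat -> R).

Definition inI (a : nat) (z : R) : Prop :=
  ((INR a - 1) * gamma <= z /\ z < INR a * gamma) \/ (a = NA /\ z = 1).

(* z in I_a^{(m,n)}: the n-th of the 2^m consecutive subintervals of I_a of
   length gamma/2^m (half open, the last one inheriting the right end of I_a) *)
Definition inSub (a m n : nat) (z : R) : Prop :=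
  inI a z /\
  (INR a - 1) * gamma + (INR n - 1) * gamma / 2 ^ m <= z /\
  (z < (INR a - 1) * gamma + INR n * gamma / 2 ^ m \/
   (n = (2 ^ m)%nat /\ z = (INR a - 1) * gamma + INR n * gamma / 2 ^ m)).

Definition fpar (j : nat) (u : point) (a : nat) (z : R) : R :=
  - B + INR j * gamma +
  lsum (seq 1 M) (fun m => lsum (seq 1 (2 ^ m)) (fun n =>
     (u m n 1%nat * (- gamma / 2 ^ (m - 1)) + u m n 2%nat * (gamma / 2 ^ (m - 1)))
     * ind (inSub a m n z))).

Definition loss (a j t : nat) (u : point) : R := (y t - fpar j u a (x t)) ^ 2.

Definition partial (a j t : nat) (u : point) (m n i : nat) : R :=
  Derive (fun v => loss a j t (upd u m n i v)) (u m n i).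

Definition Dom (u : point) : Prop :=
  forall m n, (1 <= m <= M)%nat -> (1 <= n <= 2 ^ m)%nat ->
    0 <= u m n 1%nat /\ 0 <= u m n 2%nat /\ u m n 1%nat + u m n 2%nat = 1.

(* sup over the domain of |partial_{u^{(m,n)}} l_t| is > 0 *)
Definition active (a j t m n : nat) : Prop :=
  exists u, Dom u /\ exists i, (i = 1 \/ i = 2)%nat /\ partial a j t u m n i <> 0.

Definition Gbound (m : nat) : R := 16 * B * gamma / 2 ^ m.

(* learning rate of block (m,n) of B_{a,j} used at global round t
   (its rounds are the rounds s < t with x_s in I_a) *)
Definition eta_blk (a j t m n : nat) : R :=
  / Gbound m * sqrt (ln 2 / (1 + lsum (seq 1 (t - 1))
                      (fun s => ind (inI a (x s) /\ active a j s m n)))).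

Definition wts (a j t : nat) (C : point) : point :=
  fun m n i =>
    exp (- eta_blk a j t m n * C m n i) /
    (exp (- eta_blk a j t m n * C m n 1%nat) + exp (- eta_blk a j t m n * C m n 2%nat)).

Fixpoint cumgrad (a j t : nat) : point :=
  match t with
  | O => fun _ _ _ => 0
  | S t' =>
      let C := cumgrad a j t' in
      let u := wts a j t' C in
      fun m n i =>
        C m n i +
        (if excluded_middle_informative ((1 <= t')%nat /\ inI a (x t'))
         then partial a j t' u m n i else 0)
  end.

Definition uhat (a j t : nat) : point := wts a j t (cumgrad a j t).

Definition fhat (a j t : nat) (z : R) : R := fpar j (uhat a j t) a z.

Definition eta_agg : R := 1 / (32 * B ^ 2).

Definition cumloss (a j t : nat) : R :=
  lsum (seq 1 (t - 1)) (fun s => ind (inI a (x s)) * (y s - fhat a j s (x s)) ^ 2).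

Definition what (a j t : nat) : R :=
  exp (- eta_agg * cumloss a j t) /
  lsum (seq 0 (NJ + 1)) (fun j' => exp (- eta_agg * cumloss a j' t)).

Definition fhat_a (a t : nat) (z : R) : R :=
  lsum (seq 0 (NJ + 1)) (fun j => what a j t * fhat a j t z).

Definition yhat (t : nat) : R :=
  lsum (seq 1 NA) (fun a => fhat_a a t (x t) * ind (inI a (x t))).

End DyadicChaining.

(* Main.v *)
Require Import Defs.
From Stdlib Require Import Reals Lra Lia List Psatz ClassicalEpsilon.
From Coquelicot Require Import Coquelicot.
Import ListNotations.
Open Scope R_scope.

Lemma lsum_nil f : lsum [] f = 0.
Proof. reflexivity. Qed.
Lemma lsum_cons k l f : lsum (k :: l) f = f k + lsum l f.
Proof. reflexivity. Qed.
Lemma lsum_app l1 l2 f : lsum (l1 ++ l2) f = lsum l1 f + lsum l2 f.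
Proof. induction l1; simpl; [ring| rewrite IHl1; ring]. Qed.
Lemma lsum_ext l f g : (forall k, In k l -> f k = g k) -> lsum l f = lsum l g.
Proof. induction l; simpl; intros H; auto. rewrite H, IHl; auto. Qed.
Lemma lsum_le l f g : (forall k, In k l -> f k <= g k) -> lsum l f <= lsum l g.
Proof. induction l; simpl; intros H; [lra|]. specialize (IHl (fun k h => H k (or_intror h))). specialize (H a (or_introl eq_refl)). lra. Qed.
Lemma lsum_plus l f g : lsum l (fun k => f k + g k) = lsum l f + lsum l g.
Proof. induction l; simpl; [ring| rewrite IHl; ring]. Qed.
Lemma lsum_minus l f g : lsum l (fun k => f k - g k) = lsum l f - lsum l g.
Proof. induction l; simpl; [ring| rewrite IHl; ring]. Qed.
Lemma lsum_scal l c f : lsum l (fun k => c * f k) = c * lsum l f.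
Proof. induction l; simpl; [ring| rewrite IHl; ring]. Qed.
Lemma lsum_scalr l c f : lsum l (fun k => f k * c) = lsum l f * c.
Proof. induction l; simpl; [ring| rewrite IHl; ring]. Qed.
Lemma lsum_zero l f : (forall k, In k l -> f k = 0) -> lsum l f = 0.
Proof. induction l; simpl; intros H; auto. rewrite H, IHl; auto; ring. Qed.
Lemma lsum_nonneg l f : (forall k, In k l -> 0 <= f k) -> 0 <= lsum l f.
Proof. intros H. rewrite <- (lsum_zero l (fun _ => 0)); auto. apply lsum_le; auto. Qed.
Lemma lsum_const l c : lsum l (fun _ => c) = INR (length l) * c.
Proof. induction l; simpl length; [simpl; ring|]. rewrite lsum_cons, IHl, S_INR. ring. Qed.
Lemma lsum_swap l1 l2 (F : nat -> nat -> R) :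
  lsum l1 (fun i => lsum l2 (fun j => F i j)) = lsum l2 (fun j => lsum l1 (fun i => F i j)).
Proof. induction l1; simpl. { symmetry; apply lsum_zero; auto. }
  rewrite IHl1, <- lsum_plus. reflexivity. Qed.
Lemma lsum_seq_S a n f : lsum (seq a (S n)) f = lsum (seq a n) f + f (a + n)%nat.
Proof. rewrite seq_S, lsum_app. simpl. ring. Qed.
Lemma lsum_single l f k0 : NoDup l -> In k0 l -> (forall k, In k l -> k <> k0 -> f k = 0) ->
  lsum l f = f k0.
Proof. induction l; simpl; intros Hn Hi H; [contradiction|]. inversion Hn; subst.
  destruct Hi as [<-|Hi].
  - rewrite lsum_zero; [ring|]. intros k Hk. apply H; auto. intro; subst; contradiction.
  - assert (a <> k0) by (intro; subst; contradiction).
    rewrite H; auto. rewrite IHl; auto; ring. Qed.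
Lemma lsum_abs l f : Rabs (lsum l f) <= lsum l (fun k => Rabs (f k)).
Proof. induction l; simpl. rewrite Rabs_R0; lra. eapply Rle_trans; [apply Rabs_triang|lra]. Qed.

Lemma lsum_sq_le l f : (lsum l f) ^ 2 <= INR (length l) * lsum l (fun k => f k ^ 2).
Proof. induction l as [|a l IH]; simpl length; [simpl; lra|]. rewrite !lsum_cons, S_INR.
  set (A := lsum l f) in *. set (S := lsum l (fun k => f k ^ 2)) in *. set (n := INR (length l)) in *.
  assert (0 <= n) by apply pos_INR.
  destruct (Req_dec n 0) as [Hn|Hn].
  - rewrite Hn in IH. assert (A = 0) by nra. rewrite H0, Hn.
    assert (0 <= S) by (apply lsum_nonneg; intros; apply pow2_ge_0). nra.
  - assert (0 < n) by lra.
    assert (2 * f a * A <= A^2 / n + n * f a ^ 2).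
    { assert (0 <= (A - n * f a)^2 / n) by (unfold Rdiv; apply Rmult_le_pos; [apply pow2_ge_0| left; apply Rinv_0_lt_compat; lra]).
      assert ((A - n * f a)^2 / n = A^2/n - 2 * f a * A + n * f a ^2) by (field; lra). lra. }
    assert (A ^ 2 / n <= S).
    { apply (Rmult_le_reg_r n); [lra|]. unfold Rdiv. rewrite Rmult_assoc, Rinv_l by lra. lra. }
    nra. Qed.
Lemma lsum_sqrt_le l v : (forall k, In k l -> 0 <= v k) ->
  lsum l (fun k => sqrt (v k)) <= sqrt (INR (length l) * lsum l v).
Proof. intros H. apply Rsqr_incr_0_var. 2:{ apply sqrt_pos. }
  rewrite Rsqr_sqrt. 2:{ apply Rmult_le_pos; [apply pos_INR|apply lsum_nonneg; auto]. }
  unfold Rsqr. replace (lsum l (fun k => sqrt (v k)) * lsum l (fun k => sqrt (v k))) with ((lsum l (fun k => sqrt (v k)))^2) by ring.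
  eapply Rle_trans; [apply lsum_sq_le|]. apply Rmult_le_compat_l; [apply pos_INR|].
  apply Req_le, lsum_ext. intros k Hk. rewrite <- Rsqr_pow2, Rsqr_sqrt; auto. Qed.

Lemma tangent_concave (f f' : R -> R) lo hi :
  (forall z, lo <= z <= hi -> derivable_pt_lim f z (f' z)) ->
  (forall a b, lo <= a -> a <= b -> b <= hi -> f' b <= f' a) ->
  forall m z, lo <= m <= hi -> lo <= z <= hi -> f z <= f m + f' m * (z - m).
Proof. intros Hd Hm m z Hm1 Hz.
  destruct (Rtotal_order m z) as [H|[H|H]].
  - destruct (MVT_cor2 f f' m z H) as [c [Hc1 Hc2]]. { intros; apply Hd; lra. }
    assert (f' c <= f' m) by (apply Hm; lra). nra.
  - subst; lra.
  - destruct (MVT_cor2 f f' z m H) as [c [Hc1 Hc2]]. { intros; apply Hd; lra. }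
    assert (f' m <= f' c) by (apply Hm; lra). nra. Qed.

Lemma tangent_convex (f f' : R -> R) lo hi :
  (forall z, lo <= z <= hi -> derivable_pt_lim f z (f' z)) ->
  (forall a b, lo <= a -> a <= b -> b <= hi -> f' a <= f' b) ->
  forall m z, lo <= m <= hi -> lo <= z <= hi -> f m + f' m * (z - m) <= f z.
Proof. intros Hd Hm m z H1 H2.
  assert (H := tangent_concave (fun z => - f z) (fun z => - f' z) lo hi).
  assert (- f z <= - f m + - f' m * (z - m)); [|lra].
  apply H; auto. intros; apply derivable_pt_lim_opp; auto. intros; specialize (Hm a b); lra. Qed.

Lemma deriv_nonpos (g g' : R -> R) lo hi :
  (forall z, lo <= z <= hi -> derivable_pt_lim g z (g' z)) ->
  (forall z, lo <= z <= hi -> g' z <= 0) ->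
  forall a b, lo <= a -> a <= b -> b <= hi -> g b <= g a.
Proof. intros Hd Hs a b H1 H2 H3. destruct H2 as [H2|H2]; [|subst; lra].
  destruct (MVT_cor2 g g' a b H2) as [c [Hc1 Hc2]]. { intros; apply Hd; lra. }
  assert (g' c <= 0) by (apply Hs; lra). nra. Qed.

Definition Lc (z : R) := ln (exp z + exp (- z)).
Definition th (z : R) := (exp z - exp (- z)) / (exp z + exp (- z)).

Lemma ch_pos z : 0 < exp z + exp (- z).
Proof. pose proof (exp_pos z); pose proof (exp_pos (-z)); lra. Qed.

Lemma Lc_deriv z : derivable_pt_lim Lc z (th z).
Proof. apply is_derive_Reals. unfold Lc, th. pose proof (ch_pos z).
  auto_derive. lra. field. lra. Qed.

Lemma th_deriv z : derivable_pt_lim th z (1 - th z ^ 2).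
Proof. apply is_derive_Reals. unfold th. pose proof (ch_pos z).
  auto_derive. lra. field. lra. Qed.

Lemma th_bound z : -1 <= th z <= 1.
Proof. unfold th. pose proof (exp_pos z); pose proof (exp_pos (-z)). pose proof (ch_pos z).
  split; [apply Rmult_le_reg_r with (exp z + exp (-z)); auto; unfold Rdiv; rewrite Rmult_assoc, Rinv_l; lra|].
  apply Rmult_le_reg_r with (exp z + exp (-z)); auto; unfold Rdiv; rewrite Rmult_assoc, Rinv_l; lra. Qed.

Lemma Lc_abs z : Rabs z <= Lc z.
Proof. unfold Lc. pose proof (exp_pos z); pose proof (exp_pos (-z)).
  unfold Rabs; destruct Rcase_abs.
  - rewrite <- (ln_exp (-z)) at 1. apply ln_le; [apply exp_pos|lra].
  - rewrite <- (ln_exp z) at 1. apply ln_le; [apply exp_pos|lra]. Qed.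

Lemma Lc_0 : Lc 0 = ln 2.
Proof. unfold Lc. rewrite Ropp_0, exp_0. f_equal; ring. Qed.

Lemma th_incr a b : a <= b -> th a <= th b.
Proof. intros H. assert (- th b <= - th a); [|lra].
  apply (deriv_nonpos (fun z => - th z) (fun z => - (1 - th z ^2)) a b); try lra.
  - intros; apply derivable_pt_lim_opp, th_deriv.
  - intros z _. pose proof (th_bound z). nra. Qed.

Lemma Lc_tangent m z : Lc m + th m * (z - m) <= Lc z.
Proof. apply (tangent_convex Lc th (Rmin m z) (Rmax m z)).
  - intros; apply Lc_deriv.
  - intros; apply th_incr; auto.
  - split; [apply Rmin_l|apply Rmax_l].
  - split; [apply Rmin_r|apply Rmax_r]. Qed.

Lemma Lc_scale l z : 0 <= l <= 1 -> Lc (l * z) <= l * Lc z + (1 - l) * ln 2.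
Proof. intros H. pose proof (Lc_tangent (l*z) z). pose proof (Lc_tangent (l*z) 0).
  rewrite Lc_0 in H1. nra. Qed.

Lemma Lc_step a b : Lc (a + b) <= Lc a + b * th a + b ^ 2 / 2.
Proof.
  set (k := fun v => Lc a + v * th a + v ^ 2 / 2 - Lc (a + v)).
  set (k' := fun v => th a + v - th (a + v)).
  assert (Hd : forall v, derivable_pt_lim k v (k' v)).
  { intros v. unfold k, k'. apply is_derive_Reals.
    auto_derive. { exists (th (a+v)); apply is_derive_Reals, Lc_deriv. }
    replace (Derive (fun x => Lc x) (a+v)) with (th (a+v)). lra.
    symmetry; apply is_derive_unique, is_derive_Reals, Lc_deriv. }
  assert (Hd2 : forall v, derivable_pt_lim k' v (th (a + v) ^ 2)).
  { intros v. unfold k'. apply is_derive_Reals.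
    auto_derive. { exists (1 - th (a+v)^2); apply is_derive_Reals, th_deriv. }
    replace (Derive (fun x => th x) (a+v)) with (1 - th (a+v)^2). lra.
    symmetry; apply is_derive_unique, is_derive_Reals, th_deriv. }
  assert (0 <= k b); [|unfold k in *; lra].
  assert (Hk0 : k 0 = 0) by (unfold k; cbv beta; replace (a + 0) with a by ring; field).
  assert (Hkp0 : k' 0 = 0) by (unfold k'; cbv beta; replace (a + 0) with a by ring; ring).
  pose proof (tangent_convex k k' (Rmin 0 b) (Rmax 0 b) (fun z _ => Hd z)) as HT.
  assert (k 0 + k' 0 * (b - 0) <= k b); [|rewrite Hk0, Hkp0 in *; lra].
  apply HT.
  - intros p q _ Hpq _. assert (- k' q <= - k' p); [|lra].
    apply (deriv_nonpos (fun v => - k' v) (fun v => - th (a + v) ^ 2) p q); try lra.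
    + intros; apply derivable_pt_lim_opp; auto.
    + intros; pose proof (pow2_ge_0 (th (a + z))); lra.
  - split; [apply Rmin_l|apply Rmax_l].
  - split; [apply Rmin_r|apply Rmax_r]. Qed.

Lemma th_0 : th 0 = 0.
Proof. unfold th. rewrite Ropp_0, Rminus_diag. unfold Rdiv; ring. Qed.

Definition Phi (e s : R) := (Lc (e * s) - ln 2) / e.

Lemma Phi_mono e' e s : 0 < e' -> e' <= e -> Phi e' s <= Phi e s.
Proof. intros H1 H2. unfold Phi.
  pose proof (Lc_scale (e'/e) (e * s)) as H.
  replace (e' / e * (e * s)) with (e' * s) in H by (field; lra).
  assert (0 <= e'/e <= 1). { split. apply Rlt_le, Rdiv_lt_0_compat; lra.
    apply Rmult_le_reg_r with e; [lra|]. unfold Rdiv; rewrite Rmult_assoc, Rinv_l; lra. }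
  specialize (H H0).
  apply Rmult_le_reg_r with e'; auto. unfold Rdiv at 1. rewrite Rmult_assoc, Rinv_l, Rmult_1_r by lra.
  replace ((Lc (e * s) - ln 2) / e * e') with (e'/e * (Lc (e * s) - ln 2)) by (field; lra). lra. Qed.

Lemma Phi_step e s g : 0 < e -> - g * th (e * s) <= Phi e s - Phi e (s + g) + e * g ^ 2 / 2.
Proof. intros He. unfold Phi. pose proof (Lc_step (e * s) (e * g)) as H.
  replace (e * s + e * g) with (e * (s + g)) in H by ring.
  apply Rmult_le_reg_r with e; auto.
  replace (((Lc (e * s) - ln 2) / e - (Lc (e * (s + g)) - ln 2) / e + e * g ^ 2 / 2) * e)
    with (Lc (e * s) - Lc (e * (s + g)) + e * e * g ^ 2 / 2) by (field; lra). nra. Qed.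

Lemma abs_le_Phi e s : 0 < e -> Rabs s <= Phi e s + ln 2 / e.
Proof. intros He. unfold Phi. pose proof (Lc_abs (e * s)). rewrite Rabs_mult, (Rabs_pos_eq e) in H by lra.
  replace ((Lc (e * s) - ln 2) / e + ln 2 / e) with (Lc (e * s) / e) by (field; lra).
  apply Rmult_le_reg_r with e; auto. unfold Rdiv; rewrite Rmult_assoc, Rinv_l; lra. Qed.

Lemma lsum_telescope (g s : nat -> R) n : (forall t, (1 <= t <= n)%nat -> s (S t) = s t + g t) ->
  lsum (seq 1 n) g = s (S n) - s 1%nat.
Proof. induction n; intros H. simpl; ring. rewrite lsum_seq_S, IHn. 
  replace (1 + n)%nat with (S n) by lia. rewrite (H (S n)) by lia. ring. intros; apply H; lia. Qed.

Lemma block_regret (eta g s : nat -> R) (T : nat) (p : R) :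
  (1 <= T)%nat ->
  (forall t, (1 <= t <= T)%nat -> 0 < eta t) ->
  (forall t, (1 <= t < T)%nat -> eta (S t) <= eta t) ->
  s 1%nat = 0 ->
  (forall t, (1 <= t <= T)%nat -> s (S t) = s t + g t) ->
  -1 <= p <= 1 ->
  lsum (seq 1 T) (fun t => g t * (- th (eta t * s t) - p))
    <= ln 2 / eta T + lsum (seq 1 T) (fun t => eta t * g t ^ 2 / 2).
Proof. intros HT Hpos Hmon Hs1 Hs Hp.
  assert (Aux : forall K, (1 <= K <= T)%nat ->
    lsum (seq 1 K) (fun t => - g t * th (eta t * s t)) <= - Phi (eta K) (s (S K)) + lsum (seq 1 K) (fun t => eta t * g t ^ 2 / 2)).
  { intros K HK. destruct K as [|k]; [lia|]. induction k.
    - simpl. rewrite Hs1, Rmult_0_r. rewrite Hs by lia. rewrite Hs1.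
      pose proof (Phi_step (eta 1%nat) 0 (g 1%nat) (Hpos 1%nat ltac:(lia))). rewrite Rmult_0_r in H.
      unfold Phi at 1 in H. rewrite Rmult_0_r, Lc_0 in H. unfold Rdiv in H. rewrite Rminus_diag, Rmult_0_l in H. rewrite th_0 in *. simpl in H. set (P := Phi _ _) in *. set (q := eta 1%nat * _) in *. unfold Rdiv in *. lra.
    - rewrite !(lsum_seq_S 1 (S k)). replace (1 + S k)%nat with (S (S k)) by lia.
      specialize (IHk ltac:(lia)).
      pose proof (Phi_step (eta (S (S k))) (s (S (S k))) (g (S (S k))) (Hpos (S (S k)) ltac:(lia))).
      pose proof (Phi_mono (eta (S (S k))) (eta (S k)) (s (S (S k))) (Hpos (S (S k)) ltac:(lia)) (Hmon (S k) ltac:(lia))).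
      rewrite (Hs (S (S k))) by lia. lra. }
  specialize (Aux T ltac:(lia)).
  assert (Hsum : lsum (seq 1 T) g = s (S T)) by (rewrite (lsum_telescope g s T); auto; rewrite Hs1; ring).
  assert (E : lsum (seq 1 T) (fun t => g t * (- th (eta t * s t) - p)) =
     lsum (seq 1 T) (fun t => - g t * th (eta t * s t)) - p * lsum (seq 1 T) g).
  { rewrite <- lsum_scal, <- lsum_minus. apply lsum_ext; intros; ring. }
  rewrite E, Hsum.
  pose proof (abs_le_Phi (eta T) (s (S T)) (Hpos T ltac:(lia))).
  assert (- p * s (S T) <= Rabs (s (S T))).
  { destruct (Rle_dec 0 (s (S T))). rewrite Rabs_pos_eq; nra. rewrite Rabs_left; nra. }
  lra. Qed.

Lemma ind_1 (P : Prop) : P -> Defs.ind P = 1.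
Proof. intros H. unfold Defs.ind. destruct excluded_middle_informative; tauto. Qed.
Lemma ind_0 (P : Prop) : ~ P -> Defs.ind P = 0.
Proof. intros H. unfold Defs.ind. destruct excluded_middle_informative; tauto. Qed.
Lemma ind_01 (P : Prop) : Defs.ind P = 0 \/ Defs.ind P = 1.
Proof. unfold Defs.ind. destruct excluded_middle_informative; auto. Qed.
Lemma ind_bound (P : Prop) : 0 <= Defs.ind P <= 1.
Proof. destruct (ind_01 P) as [H|H]; rewrite H; lra. Qed.

Lemma powR2_pos m : 0 < 2 ^ m.
Proof. apply pow_lt; lra. Qed.

Lemma INR_pow2 m : INR (2 ^ m) = 2 ^ m.
Proof. rewrite pow_INR. simpl. f_equal. Qed.

Section Intervals.
Variables (gamma : R) (NA : nat).
Hypothesis Hg : 0 < gamma.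
Hypothesis HNA : INR NA * gamma = 1.

Lemma inSub_unique a m n n' z : (1 <= n <= 2 ^ m)%nat -> (1 <= n' <= 2 ^ m)%nat ->
  inSub gamma NA a m n z -> inSub gamma NA a m n' z -> n = n'.
Proof.
  assert (Hgen : forall n n', (n < n' <= 2 ^ m)%nat -> inSub gamma NA a m n z -> inSub gamma NA a m n' z -> False).
  { intros p q Hpq [_ [H1 H2]] [_ [H3 H4]].
    set (L := (INR a - 1) * gamma) in *. set (w := gamma / 2 ^ m) in *.
    assert (Hw : 0 < w) by (apply Rdiv_lt_0_compat; auto; apply powR2_pos).
    assert (INR p + 1 <= INR q). { rewrite <- S_INR. apply le_INR. lia. }
    assert (INR q <= 2 ^ m). { rewrite <- INR_pow2. apply le_INR. lia. }
    assert (E1 : (INR p) * w <= (INR q - 1) * w) by (apply Rmult_le_compat_r; lra).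
    assert (R1 : forall r, r * gamma / 2 ^ m = r * w) by (intros; unfold w, Rdiv; ring).
    rewrite !R1 in *.
    destruct H2 as [H2|[H2a H2b]].
    - lra.
    - subst p. rewrite INR_pow2 in H. lra. }
  intros Hn Hn' H H'. destruct (Nat.lt_trichotomy n n') as [Hl|[Hl|Hl]]; auto.
  - exfalso; apply (Hgen n n'); auto; lia.
  - exfalso; apply (Hgen n' n); auto; lia. Qed.

Lemma inSub_exists a z : (1 <= a)%nat -> inI gamma NA a z ->
  forall m, exists n, (1 <= n <= 2 ^ m)%nat /\ inSub gamma NA a m n z.
Proof. intros Ha HI m. induction m.
  - exists 1%nat. split; [simpl; lia|]. split; auto. simpl.
    destruct HI as [[H1 H2]|[H1 H2]].
    + split; [lra|]. left; lra.
    + subst. split; [|right; split; auto; lra]. nra.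
  - destruct IHm as [n [Hn [HIn [H1 H2]]]].
    set (L := (INR a - 1) * gamma) in *.
    assert (Hp : 0 < 2 ^ m) by apply powR2_pos.
    assert (E2 : 2 ^ S m = 2 * 2 ^ m) by (simpl; ring).
    assert (En : 1 <= INR n) by (apply (le_INR 1); lia).
    set (w := gamma / 2 ^ m) in *.
    assert (Hw : 0 < w) by (apply Rdiv_lt_0_compat; auto).
    assert (R1 : forall r, r * gamma / 2 ^ m = r * w) by (intros; unfold w, Rdiv; ring).
    assert (R2 : forall r, r * gamma / 2 ^ S m = r * w / 2) by (intros; rewrite E2; unfold w, Rdiv; field; lra).
    rewrite R1 in H1, H2.
    destruct (Rlt_dec z (L + (2 * INR n - 1) * w / 2)) as [Hz|Hz].
    + exists (2 * n - 1)%nat. split; [rewrite Nat.pow_succ_r'; lia|]. split; auto.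
      rewrite !R2. rewrite minus_INR, mult_INR by lia. simpl INR. fold L.
      split; [lra|]. left. lra.
    + exists (2 * n)%nat. split; [rewrite Nat.pow_succ_r'; lia|]. split; auto.
      rewrite !R2. rewrite mult_INR. simpl INR. fold L. split; [lra|].
      destruct H2 as [H2|[H2a H2b]].
      * left. lra.
      * right. split. rewrite H2a, Nat.pow_succ_r'; lia. lra. Qed.

Lemma sum_inSub a m z (F : nat -> R) : (1 <= a)%nat -> inI gamma NA a z ->
  exists n, (1 <= n <= 2 ^ m)%nat /\ inSub gamma NA a m n z /\
  lsum (seq 1 (2 ^ m)) (fun n => F n * Defs.ind (inSub gamma NA a m n z)) = F n.
Proof. intros Ha HI. destruct (inSub_exists a z Ha HI m) as [n [Hn HS]].
  exists n. split; auto. split; auto.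
  rewrite (lsum_single _ _ n). rewrite ind_1; auto; ring. apply seq_NoDup. apply in_seq; lia.
  intros k Hk Hkn. rewrite ind_0; [ring|]. intro. apply Hkn. apply in_seq in Hk.
  apply (inSub_unique a m k n z); auto; lia. Qed.

Lemma sum_inSub_le a m z (F : nat -> R) : (forall n, 0 <= F n) ->
  lsum (seq 1 (2 ^ m)) (fun n => F n * Defs.ind (inSub gamma NA a m n z)) <=
  Rmax 0 (lsum (seq 1 (2^m)) (fun n => F n * Defs.ind (inSub gamma NA a m n z))).
Proof. intros; apply Rmax_r. Qed.

(* at most one n *)
Lemma sum_inSub_bound a m z (F : nat -> R) c : (forall n, Rabs (F n) <= c) -> 0 <= c ->
  Rabs (lsum (seq 1 (2 ^ m)) (fun n => F n * Defs.ind (inSub gamma NA a m n z))) <= c.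
Proof. intros HF Hc.
  destruct (classic (exists n, (1 <= n <= 2 ^ m)%nat /\ inSub gamma NA a m n z)) as [[n [Hn HS]]|Hno].
  - rewrite (lsum_single _ _ n). rewrite ind_1; auto. rewrite Rmult_1_r; auto. apply seq_NoDup. apply in_seq; lia.
    intros k Hk Hkn. rewrite ind_0; [ring|]. intro. apply Hkn. apply in_seq in Hk.
    apply (inSub_unique a m k n z); auto; lia.
  - rewrite lsum_zero. rewrite Rabs_R0; auto. intros k Hk. rewrite ind_0; [ring|]. intro. apply Hno.
    exists k. apply in_seq in Hk. split; auto; lia. Qed.

End Intervals.

Definition coefm (gamma : R) (m : nat) := gamma / 2 ^ (m - 1).

Lemma geom_sum K : lsum (seq 1 K) (fun m => 1 / 2 ^ (m - 1)) <= 2 - 2 / 2 ^ K.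
Proof. induction K. simpl; lra. rewrite lsum_seq_S. replace (1 + K - 1)%nat with K by lia.
  assert (0 < 2 ^ K) by apply powR2_pos. simpl pow.
  replace (2 - 2 / (2 * 2 ^ K)) with (2 - 2 / 2 ^ K + 1 / 2 ^ K) by (field; lra). lra. Qed.

Lemma coef_sum gamma K : 0 < gamma -> lsum (seq 1 K) (fun m => coefm gamma m) <= 2 * gamma.
Proof. intros Hg. unfold coefm. rewrite (lsum_ext _ _ (fun m => gamma * (1 / 2 ^ (m - 1)))).
  rewrite lsum_scal. pose proof (geom_sum K). assert (0 < 2 / 2 ^ K) by (apply Rdiv_lt_0_compat; [lra|apply powR2_pos]). nra.
  intros; unfold Rdiv; ring. Qed.

Section Alg.
Variables (B gamma : R) (M NA : nat) (x y : nat -> R).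
Hypothesis Hg : 0 < gamma.

Lemma coefm_pos m : 0 < coefm gamma m.
Proof. unfold coefm. apply Rdiv_lt_0_compat; auto; apply powR2_pos. Qed.

Definition blk (u : point) (a m : nat) (z : R) :=
  lsum (seq 1 (2 ^ m)) (fun n => (u m n 2%nat - u m n 1%nat) * coefm gamma m * Defs.ind (inSub gamma NA a m n z)).

Lemma fpar_alt j u a z : fpar B gamma M NA j u a z =
  - B + INR j * gamma + lsum (seq 1 M) (fun m => blk u a m z).
Proof. unfold fpar, blk. f_equal. apply lsum_ext; intros. apply lsum_ext; intros.
  unfold coefm, Rdiv; ring. Qed.

Definition sgn (i : nat) : R := if Nat.eqb i 2 then 1 else if Nat.eqb i 1 then -1 else 0.

Lemma fpar_upd j u a z m n i v :
  fpar B gamma M NA j (upd u m n i v) a z = fpar B gamma M NA j u a z +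
   (if excluded_middle_informative ((1 <= m <= M)%nat /\ (1 <= n <= 2 ^ m)%nat) then
      (v - u m n i) * sgn i * coefm gamma m * Defs.ind (inSub gamma NA a m n z) else 0).
Proof.
  rewrite !fpar_alt.
  assert (D : forall m' n', (upd u m n i v m' n' 2%nat - upd u m n i v m' n' 1%nat) - (u m' n' 2%nat - u m' n' 1%nat)
      = if (Nat.eqb m' m && Nat.eqb n' n)%bool then (v - u m n i) * sgn i else 0).
  { intros m' n'. unfold upd, sgn.
    destruct (Nat.eqb_spec m' m); destruct (Nat.eqb_spec n' n); simpl; try ring. subst.
    destruct i as [|[|[|i]]]; simpl; ring. }
  assert (Hdiff : lsum (seq 1 M) (fun m0 => blk (upd u m n i v) a m0 z) - lsum (seq 1 M) (fun m0 => blk u a m0 z) =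
     (if excluded_middle_informative ((1 <= m <= M)%nat /\ (1 <= n <= 2 ^ m)%nat) then
      (v - u m n i) * sgn i * coefm gamma m * Defs.ind (inSub gamma NA a m n z) else 0)).
  { rewrite <- lsum_minus. unfold blk.
    assert (Hm : forall m', lsum (seq 1 (2 ^ m')) (fun n0 => (upd u m n i v m' n0 2%nat - upd u m n i v m' n0 1%nat) * coefm gamma m' * Defs.ind (inSub gamma NA a m' n0 z)) -
        lsum (seq 1 (2 ^ m')) (fun n0 => (u m' n0 2%nat - u m' n0 1%nat) * coefm gamma m' * Defs.ind (inSub gamma NA a m' n0 z)) =
        lsum (seq 1 (2 ^ m')) (fun n0 => (if (Nat.eqb m' m && Nat.eqb n0 n)%bool then (v - u m n i) * sgn i else 0) * coefm gamma m' * Defs.ind (inSub gamma NA a m' n0 z))).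
    { intros m'. rewrite <- lsum_minus. apply lsum_ext. intros n0 _. rewrite <- D. ring. }
    rewrite (lsum_ext _ _ _ (fun m' _ => Hm m')).
    destruct excluded_middle_informative as [[H1 H2]|Hno].
    - rewrite (lsum_single _ _ m). 2: apply seq_NoDup. 2: apply in_seq; lia.
      + rewrite (lsum_single _ _ n). 2: apply seq_NoDup. 2: apply in_seq; lia.
        * rewrite !Nat.eqb_refl. simpl. ring.
        * intros k _ Hk. rewrite Nat.eqb_refl. apply Nat.eqb_neq in Hk. rewrite Hk. simpl. ring.
      + intros k _ Hk. apply lsum_zero. intros k' _. apply Nat.eqb_neq in Hk. rewrite Hk. simpl. ring.
    - apply lsum_zero. intros m' Hm'. apply lsum_zero. intros n' Hn'.
      destruct (Nat.eqb_spec m' m); destruct (Nat.eqb_spec n' n); simpl; try ring.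
      subst. apply in_seq in Hm'. apply in_seq in Hn'. exfalso; apply Hno; split; lia. }
  lra. Qed.

Definition grad (a j t : nat) (u : point) (m n : nat) : R :=
  -2 * (y t - fpar B gamma M NA j u a (x t)) * coefm gamma m * Defs.ind (inSub gamma NA a m n (x t)).

Lemma partial_gen a j t u m n i :
  partial B gamma M NA x y a j t u m n i =
  (if excluded_middle_informative ((1 <= m <= M)%nat /\ (1 <= n <= 2 ^ m)%nat) then
     sgn i * grad a j t u m n else 0).
Proof. unfold partial, loss.
  set (K := fpar B gamma M NA j u a (x t)).
  set (d := if excluded_middle_informative ((1 <= m <= M)%nat /\ (1 <= n <= 2 ^ m)%nat) then
      sgn i * coefm gamma m * Defs.ind (inSub gamma NA a m n (x t)) else 0).
  rewrite (Derive_ext _ (fun v => (y t - (K + (v - u m n i) * d)) ^ 2)).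
  2:{ intros v. rewrite fpar_upd. fold K. unfold d. destruct excluded_middle_informative; [ring|ring]. }
  rewrite (is_derive_unique _ _ (-2 * (y t - K) * d)).
  - unfold d, grad. fold K. destruct excluded_middle_informative; ring.
  - auto_derive; auto. ring. Qed.

Lemma partial_12 a j t u m n :
  partial B gamma M NA x y a j t u m n 1%nat = - partial B gamma M NA x y a j t u m n 2%nat.
Proof. rewrite !partial_gen. unfold sgn. simpl. destruct excluded_middle_informative; ring. Qed.

Lemma partial_2 a j t u m n : (1 <= m <= M)%nat -> (1 <= n <= 2 ^ m)%nat ->
  partial B gamma M NA x y a j t u m n 2%nat = grad a j t u m n.
Proof. intros. rewrite partial_gen. unfold sgn; simpl. destruct excluded_middle_informative; [ring|tauto]. Qed.

Lemma partial_out a j t u m n i : ~ ((1 <= m <= M)%nat /\ (1 <= n <= 2 ^ m)%nat) ->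
  partial B gamma M NA x y a j t u m n i = 0.
Proof. intros. rewrite partial_gen. destruct excluded_middle_informative; tauto. Qed.

Lemma cumgrad_12 a j t m n :
  cumgrad B gamma M NA x y a j t m n 1%nat = - cumgrad B gamma M NA x y a j t m n 2%nat.
Proof. induction t; simpl. ring. rewrite IHt, partial_12. destruct excluded_middle_informative; ring. Qed.

Definition eta (a j t m n : nat) := eta_blk B gamma M NA x y a j t m n.
Definition Cg (a j t m n : nat) := cumgrad B gamma M NA x y a j t m n 2%nat.

Lemma uhat_formula a j t m n i :
  uhat B gamma M NA x y a j t m n i = exp (- eta a j t m n * cumgrad B gamma M NA x y a j t m n i) /
    (exp (eta a j t m n * Cg a j t m n) + exp (- (eta a j t m n * Cg a j t m n))).
Proof. unfold uhat, wts, eta, Cg. rewrite cumgrad_12. f_equal. f_equal; f_equal; ring. Qed.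

Lemma uhat_dom a j t : Dom M (uhat B gamma M NA x y a j t).
Proof. intros m n _ _. rewrite !uhat_formula. rewrite cumgrad_12. fold (Cg a j t m n).
  set (e := eta a j t m n). set (C := Cg a j t m n). pose proof (ch_pos (e * C)).
  pose proof (exp_pos (- e * - C)). pose proof (exp_pos (- e * C)).
  split; [apply Rlt_le, Rdiv_lt_0_compat; lra|]. split; [apply Rlt_le, Rdiv_lt_0_compat; lra|].
  replace (- e * - C) with (e * C) by ring. replace (- e * C) with (- (e * C)) by ring. field. lra. Qed.

Lemma uhat_diff a j t m n :
  uhat B gamma M NA x y a j t m n 2%nat - uhat B gamma M NA x y a j t m n 1%nat = - th (eta a j t m n * Cg a j t m n).
Proof. rewrite !uhat_formula. rewrite cumgrad_12. fold (Cg a j t m n).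
  set (e := eta a j t m n). set (C := Cg a j t m n). pose proof (ch_pos (e * C)). unfold th.
  replace (- e * - C) with (e * C) by ring. replace (- e * C) with (- (e * C)) by ring. field. lra. Qed.

Lemma blk_bound (u : point) a m z : (forall n, Rabs (u m n 2%nat - u m n 1%nat) <= 1) ->
  Rabs (blk u a m z) <= coefm gamma m.
Proof. intros H. unfold blk. apply (sum_inSub_bound gamma NA Hg a m z (fun n => (u m n 2%nat - u m n 1%nat) * coefm gamma m)).
  intros n. rewrite Rabs_mult, (Rabs_pos_eq (coefm gamma m)) by (apply Rlt_le, coefm_pos).
  specialize (H n). pose proof (coefm_pos m). nra. apply Rlt_le, coefm_pos. Qed.

Lemma fpar_bound j u a z : (forall m n, Rabs (u m n 2%nat - u m n 1%nat) <= 1) ->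
  Rabs (fpar B gamma M NA j u a z - (- B + INR j * gamma)) <= 2 * gamma.
Proof. intros H. rewrite fpar_alt. replace (- B + INR j * gamma + lsum (seq 1 M) (fun m => blk u a m z) - (- B + INR j * gamma))
  with (lsum (seq 1 M) (fun m => blk u a m z)) by ring.
  eapply Rle_trans; [apply lsum_abs|]. eapply Rle_trans; [|apply (coef_sum gamma M Hg)].
  apply lsum_le. intros; apply blk_bound; auto. Qed.

Lemma dom_diff (u : point) m n : 0 <= u m n 1%nat -> 0 <= u m n 2%nat -> u m n 1%nat + u m n 2%nat = 1 ->
  Rabs (u m n 2%nat - u m n 1%nat) <= 1.
Proof. intros. apply Rabs_le. lra. Qed.

Lemma uhat_diff_bound a j t m n : Rabs (uhat B gamma M NA x y a j t m n 2%nat - uhat B gamma M NA x y a j t m n 1%nat) <= 1.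
Proof. rewrite uhat_diff. rewrite Rabs_Ropp. apply Rabs_le. apply th_bound. Qed.

Lemma fhat_bound a j t z : Rabs (fhat B gamma M NA x y a j t z - (- B + INR j * gamma)) <= 2 * gamma.
Proof. apply fpar_bound. intros; apply uhat_diff_bound. Qed.

End Alg.

Lemma count_sum (c d : nat -> R) K :
  c 1%nat = 0 -> (forall t, (1 <= t <= K)%nat -> c (S t) = c t + d t) ->
  (forall t, d t = 0 \/ d t = 1) -> (forall t, (1 <= t)%nat -> 0 <= c t) ->
  lsum (seq 1 K) (fun t => d t / sqrt (1 + c t)) <= 2 * sqrt (c (S K)).
Proof. intros H1 Hs Hd Hc. induction K.
  - simpl. rewrite H1, sqrt_0. lra.
  - rewrite lsum_seq_S. replace (1 + K)%nat with (S K) by lia.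
    specialize (IHK (fun t Ht => Hs t ltac:(lia))).
    rewrite (Hs (S K)) by lia. assert (0 <= c (S K)) by (apply Hc; lia).
    destruct (Hd (S K)) as [E|E]; rewrite E.
    + unfold Rdiv. rewrite Rmult_0_l, !Rplus_0_r. lra.
    + set (cc := c (S K)) in *.
      assert (Hs1 : 0 < sqrt (1 + cc)) by (apply sqrt_lt_R0; lra).
      pose proof (sqrt_sqrt (1 + cc) ltac:(lra)). pose proof (sqrt_sqrt cc ltac:(lra)).
      pose proof (sqrt_pos cc).
      replace (cc + 1) with (1 + cc) by ring.
      assert (2 * sqrt cc + 1 / sqrt (1 + cc) <= 2 * sqrt (1 + cc)); [|lra].
      apply Rmult_le_reg_r with (sqrt (1 + cc)); auto.
      rewrite Rmult_plus_distr_r. replace (1 / sqrt (1 + cc) * sqrt (1 + cc)) with 1 by (field; lra).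
      nra. Qed.

Section Regret.
Variables (B gamma : R) (M NA : nat) (x y : nat -> R) (T : nat).
Hypothesis HB : 0 < B.
Hypothesis Hg : 0 < gamma.
Hypothesis HgB : gamma <= B.
Hypothesis Hy : forall t, (1 <= t <= T)%nat -> Rabs (y t) <= B.
Variables (a j : nat).
Hypothesis Hj : 0 <= INR j * gamma <= 2 * B.

Local Notation F := (fpar B gamma M NA j).
Local Notation U := (uhat B gamma M NA x y a j).
Local Notation GR := (grad B gamma M NA x y a j).

Lemma lin_step t (us : point) :
  (y t - F (U t) a (x t)) ^ 2 - (y t - F us a (x t)) ^ 2 <=
  lsum (seq 1 M) (fun m => lsum (seq 1 (2 ^ m)) (fun n =>
     GR t (U t) m n * ((U t m n 2%nat - U t m n 1%nat) - (us m n 2%nat - us m n 1%nat)))).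
Proof.
  set (Fh := F (U t) a (x t)). set (Fs := F us a (x t)).
  assert (E : lsum (seq 1 M) (fun m => lsum (seq 1 (2 ^ m)) (fun n =>
     GR t (U t) m n * ((U t m n 2%nat - U t m n 1%nat) - (us m n 2%nat - us m n 1%nat)))) =
     -2 * (y t - Fh) * (Fh - Fs)).
  { unfold Fh, Fs. rewrite !fpar_alt. unfold grad.
    replace (- B + INR j * gamma + lsum (seq 1 M) (fun m => blk gamma NA (U t) a m (x t)) -
      (- B + INR j * gamma + lsum (seq 1 M) (fun m => blk gamma NA us a m (x t))))
     with (lsum (seq 1 M) (fun m => blk gamma NA (U t) a m (x t) - blk gamma NA us a m (x t))) by (rewrite lsum_minus; ring).
    rewrite <- lsum_scal. apply lsum_ext. intros m _. unfold blk. rewrite <- lsum_minus, <- lsum_scal.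
    apply lsum_ext. intros n _. rewrite fpar_alt. unfold blk. ring. }
  rewrite E. replace ((y t - Fh) ^ 2 - (y t - Fs) ^ 2) with (-2 * (y t - Fh) * (Fh - Fs) - (Fh - Fs) ^ 2) by ring. pose proof (pow2_ge_0 (Fh - Fs)). lra. Qed.

Lemma F_hat_bound t : Rabs (F (U t) a (x t)) <= 3 * B.
Proof. pose proof (fhat_bound B gamma M NA x y Hg a j t (x t)). unfold fhat in H.
  apply Rabs_le. apply Rabs_le_between in H. lra. Qed.

Lemma grad_bound t m n : (1 <= t <= T)%nat -> (1 <= m)%nat -> Rabs (GR t (U t) m n) <= Gbound B gamma m.
Proof. intros Ht Hm. unfold grad, Gbound. pose proof (F_hat_bound t). pose proof (Hy t Ht).
  assert (Rabs (y t - F (U t) a (x t)) <= 4 * B).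
  { eapply Rle_trans; [apply Rabs_triang|]. rewrite Rabs_Ropp. lra. }
  rewrite !Rabs_mult. rewrite (Rabs_pos_eq (coefm gamma m)) by (apply Rlt_le, coefm_pos; auto).
  rewrite (Rabs_pos_eq (Defs.ind _)) by apply ind_bound. pose proof (ind_bound (inSub gamma NA a m n (x t))).
  replace (Rabs (-2)) with 2 by (rewrite Rabs_left; lra).
  assert (E : 16 * B * gamma / 2 ^ m = 8 * B * coefm gamma m).
  { unfold coefm. destruct m; [lia|]. replace (S m - 1)%nat with m by lia. replace (2 ^ S m) with (2 * 2 ^ m) by (simpl; ring).
    pose proof (powR2_pos m). field. lra. }
  rewrite E. pose proof (coefm_pos gamma Hg m). pose proof (Rabs_pos (y t - F (U t) a (x t))).
  assert (Rabs (y t - F (U t) a (x t)) * coefm gamma m * Defs.ind (inSub gamma NA a m n (x t)) <= 4 * B * coefm gamma m).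
  { apply Rle_trans with (Rabs (y t - F (U t) a (x t)) * coefm gamma m). 
    rewrite <- (Rmult_1_r (Rabs _ * coefm _ _)) at 2. apply Rmult_le_compat_l; [nra|lra].
    apply Rmult_le_compat_r; lra. }
  nra. Qed.

Definition actb (t m n : nat) : R := Defs.ind (inI gamma NA a (x t) /\ active B gamma M NA x y a j t m n).
Definition cnt (t m n : nat) : R := lsum (seq 1 (t - 1)) (fun s => actb s m n).

Lemma eta_eq t m n : eta B gamma M NA x y a j t m n = / Gbound B gamma m * sqrt (ln 2 / (1 + cnt t m n)).
Proof. reflexivity. Qed.

Lemma cnt_nonneg t m n : 0 <= cnt t m n.
Proof. apply lsum_nonneg. intros; apply ind_bound. Qed.

Lemma cnt_S t m n : (1 <= t)%nat -> cnt (S t) m n = cnt t m n + actb t m n.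
Proof. intros. unfold cnt. replace (S t - 1)%nat with (S (t - 1)) by lia. rewrite lsum_seq_S.
  replace (1 + (t - 1))%nat with t by lia. reflexivity. Qed.

Lemma Gbound_pos m : 0 < Gbound B gamma m.
Proof. unfold Gbound. apply Rdiv_lt_0_compat; [nra|apply powR2_pos]. Qed.

Lemma ln2_pos : 0 < ln 2.
Proof. pose proof ln_lt_2. lra. Qed.
Lemma ln2_le1 : ln 2 <= 1.
Proof. rewrite <- ln_exp. apply ln_le. lra. pose proof (exp_ineq1 1). lra. Qed.

Lemma eta_pos t m n : 0 < eta B gamma M NA x y a j t m n.
Proof. rewrite eta_eq. pose proof (cnt_nonneg t m n). apply Rmult_lt_0_compat.
  apply Rinv_0_lt_compat, Gbound_pos. apply sqrt_lt_R0. apply Rdiv_lt_0_compat; [apply ln2_pos|lra]. Qed.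

Lemma eta_mono t m n : (1 <= t)%nat -> eta B gamma M NA x y a j (S t) m n <= eta B gamma M NA x y a j t m n.
Proof. intros Ht. rewrite !eta_eq, cnt_S by auto. pose proof (cnt_nonneg t m n). pose proof (ind_bound (inI gamma NA a (x t) /\ active B gamma M NA x y a j t m n)).
  fold (actb t m n) in H0. apply Rmult_le_compat_l. left; apply Rinv_0_lt_compat, Gbound_pos.
  apply sqrt_le_1_alt. pose proof ln2_pos. apply Rmult_le_compat_l; [lra|]. apply Rinv_le_contravar; lra. Qed.

Lemma active_inSub t m n : active B gamma M NA x y a j t m n -> inSub gamma NA a m n (x t).
Proof. intros [u [_ [i [_ Hp]]]]. rewrite partial_gen in Hp. destruct excluded_middle_informative; [|lra].
  unfold grad in Hp. destruct (classic (inSub gamma NA a m n (x t))) as [H|H]; auto.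
  rewrite ind_0 in Hp; auto. lra. Qed.

Definition gtb (t m n : nat) : R := Defs.ind (inI gamma NA a (x t)) * GR t (U t) m n.

Lemma block_bound m n (p : R) : (1 <= m <= M)%nat -> (1 <= n <= 2 ^ m)%nat -> (1 <= T)%nat -> -1 <= p <= 1 ->
  lsum (seq 1 T) (fun t => gtb t m n * ((U t m n 2%nat - U t m n 1%nat) - p)) <=
  2 * Gbound B gamma m * sqrt (1 + cnt (S T) m n).
Proof. intros Hm Hn HT Hp.
  pose proof (block_regret (fun t => eta B gamma M NA x y a j t m n) (fun t => gtb t m n) (fun t => Cg B gamma M NA x y a j t m n) T p HT) as HR.
  assert (HR' : lsum (seq 1 T) (fun t => gtb t m n * ((U t m n 2%nat - U t m n 1%nat) - p)) <=
    ln 2 / eta B gamma M NA x y a j T m n + lsum (seq 1 T) (fun t => eta B gamma M NA x y a j t m n * gtb t m n ^ 2 / 2)).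
  { rewrite (lsum_ext _ _ (fun t => gtb t m n * (- th (eta B gamma M NA x y a j t m n * Cg B gamma M NA x y a j t m n) - p))).
    apply HR.
    - intros; apply eta_pos.
    - intros; apply eta_mono; lia.
    - unfold Cg. simpl. destruct excluded_middle_informative; [lia|ring].
    - intros t Ht. unfold Cg. simpl cumgrad at 1. destruct excluded_middle_informative as [[_ HI]|HI].
      + unfold gtb. rewrite ind_1 by auto. rewrite partial_2 by auto. unfold uhat. ring.
      + unfold gtb. rewrite ind_0. ring. intro; apply HI; split; auto; lia.
    - auto.
    - intros t _. rewrite uhat_diff. reflexivity. }
  set (G := Gbound B gamma m) in *. assert (HG : 0 < G) by apply Gbound_pos.
  assert (Hsq : sqrt (ln 2) <= 1). { rewrite <- sqrt_1. apply sqrt_le_1_alt. apply ln2_le1. }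
  pose proof ln2_pos.
  assert (T1 : ln 2 / eta B gamma M NA x y a j T m n <= G * sqrt (1 + cnt (S T) m n)).
  { rewrite eta_eq. fold G. pose proof (cnt_nonneg T m n). pose proof (cnt_nonneg (S T) m n).
    assert (cnt T m n <= cnt (S T) m n) by (rewrite cnt_S by lia; pose proof (ind_bound (inI gamma NA a (x T) /\ active B gamma M NA x y a j T m n)); unfold actb; lra).
    rewrite sqrt_div_alt by lra.
    replace (ln 2 / (/ G * (sqrt (ln 2) / sqrt (1 + cnt T m n)))) with (G * sqrt (ln 2) * sqrt (1 + cnt T m n)).
    2:{ rewrite <- (sqrt_sqrt (ln 2)) at 2 by lra. field. repeat split; apply Rgt_not_eq; try apply sqrt_lt_R0; lra. }
    pose proof (sqrt_pos (1 + cnt T m n)). assert (sqrt (1 + cnt T m n) <= sqrt (1 + cnt (S T) m n)) by (apply sqrt_le_1_alt; lra).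
    pose proof (sqrt_pos (ln 2)). apply Rle_trans with (G * sqrt (1 + cnt T m n)); [|apply Rmult_le_compat_l; lra].
    rewrite Rmult_assoc. apply Rmult_le_compat_l; [lra|]. rewrite <- (Rmult_1_l (sqrt (1 + cnt T m n))) at 2. apply Rmult_le_compat_r; lra. }
  assert (T2 : lsum (seq 1 T) (fun t => eta B gamma M NA x y a j t m n * gtb t m n ^ 2 / 2) <=
     G / 2 * lsum (seq 1 T) (fun t => actb t m n / sqrt (1 + cnt t m n))).
  { rewrite <- lsum_scal. apply lsum_le. intros t Ht. apply in_seq in Ht.
    rewrite eta_eq. fold G. pose proof (cnt_nonneg t m n).
    assert (Hc : 0 < sqrt (1 + cnt t m n)) by (apply sqrt_lt_R0; lra).
    rewrite sqrt_div_alt by lra.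
    assert (Hgt : gtb t m n ^ 2 <= actb t m n * G ^ 2).
    { destruct (classic (inI gamma NA a (x t) /\ active B gamma M NA x y a j t m n)) as [HA|HA].
      - unfold actb. rewrite ind_1 by auto. unfold gtb. rewrite ind_1 by tauto.
        pose proof (grad_bound t m n ltac:(lia) ltac:(lia)). fold G in H1.
        rewrite Rmult_1_l, Rmult_1_l. rewrite <- Rsqr_pow2, <- Rsqr_pow2. apply Rsqr_le_abs_1. rewrite (Rabs_pos_eq G); lra.
      - unfold actb. rewrite (ind_0 _ HA). unfold gtb.
        destruct (classic (inI gamma NA a (x t))) as [HI|HI]; [|rewrite ind_0 by auto; simpl; lra].
        assert (GR t (U t) m n = 0).
        { destruct (Req_dec (GR t (U t) m n) 0) as [E|E]; auto. exfalso. apply HA. split; auto.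
          exists (U t). split. apply uhat_dom; auto. exists 2%nat. split; auto. rewrite partial_2 by auto. auto. }
        rewrite H1. simpl; lra. }
    pose proof (ind_bound (inI gamma NA a (x t) /\ active B gamma M NA x y a j t m n)). fold (actb t m n) in H1.
    pose proof (sqrt_pos (ln 2)).
    apply Rle_trans with (/ G * (sqrt (ln 2) / sqrt (1 + cnt t m n)) * (actb t m n * G ^ 2) / 2).
    { unfold Rdiv. apply Rmult_le_compat_r; [lra|]. apply Rmult_le_compat_l; auto.
      apply Rmult_le_pos. left; apply Rinv_0_lt_compat; lra. apply Rmult_le_pos; auto. left; apply Rinv_0_lt_compat; lra. }
    replace (/ G * (sqrt (ln 2) / sqrt (1 + cnt t m n)) * (actb t m n * G ^ 2) / 2) with
      (G / 2 * (actb t m n / sqrt (1 + cnt t m n)) * sqrt (ln 2)) by (field; lra).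
    assert (0 <= G / 2 * (actb t m n / sqrt (1 + cnt t m n))).
    { apply Rmult_le_pos; [lra|]. apply Rdiv_le_0_compat; lra. }
    nra. }
  pose proof (count_sum (fun t => cnt t m n) (fun t => actb t m n) T).
  assert (lsum (seq 1 T) (fun t => actb t m n / sqrt (1 + cnt t m n)) <= 2 * sqrt (cnt (S T) m n)).
  { apply H0. unfold cnt; simpl; reflexivity. intros; apply cnt_S; lia. intros; apply ind_01. intros; apply cnt_nonneg. }
  pose proof (cnt_nonneg (S T) m n).
  assert (sqrt (cnt (S T) m n) <= sqrt (1 + cnt (S T) m n)) by (apply sqrt_le_1_alt; lra).
  nra. Qed.

End Regret.

Lemma sqrt_plus_le a b : 0 <= a -> 0 <= b -> sqrt (a + b) <= sqrt a + sqrt b.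
Proof. intros. apply Rsqr_incr_0_var. 2: pose proof (sqrt_pos a); pose proof (sqrt_pos b); lra.
  rewrite Rsqr_sqrt by lra. unfold Rsqr. pose proof (sqrt_sqrt a H). pose proof (sqrt_sqrt b H0).
  pose proof (sqrt_pos a); pose proof (sqrt_pos b). nra. Qed.

Lemma pow2_ge1 m : 1 <= 2 ^ m.
Proof. induction m; simpl; lra. Qed.

Section Regret2.
Variables (B gamma : R) (M NA : nat) (x y : nat -> R) (T : nat).
Hypothesis HB : 0 < B.
Hypothesis Hg : 0 < gamma.
Hypothesis HgB : gamma <= B.
Hypothesis Hy : forall t, (1 <= t <= T)%nat -> Rabs (y t) <= B.
Hypothesis HT : (1 <= T)%nat.
Variables (a j : nat).
Hypothesis Hj : 0 <= INR j * gamma <= 2 * B.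

Local Notation F := (fpar B gamma M NA j).
Local Notation U := (uhat B gamma M NA x y a j).

Definition Ta := lsum (seq 1 T) (fun t => Defs.ind (inI gamma NA a (x t))).

Lemma aj_regret (us : point) : (forall m n, Rabs (us m n 2%nat - us m n 1%nat) <= 1) ->
  lsum (seq 1 T) (fun t => Defs.ind (inI gamma NA a (x t)) * ((y t - F (U t) a (x t)) ^ 2 - (y t - F us a (x t)) ^ 2))
  <= 32 * B * gamma * INR M * (1 + sqrt Ta).
Proof. intros Hus.
  set (act := actb B gamma M NA x y a j) in *.
  set (gt := gtb B gamma M NA x y a j) in *.
  apply Rle_trans with (lsum (seq 1 M) (fun m => lsum (seq 1 (2 ^ m)) (fun n =>
     lsum (seq 1 T) (fun t => gt t m n * ((U t m n 2%nat - U t m n 1%nat) - (us m n 2%nat - us m n 1%nat)))))).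
  { eapply Rle_trans.
    - apply lsum_le. intros t _. apply Rmult_le_compat_l. apply ind_bound. apply (lin_step B gamma M NA x y a j t us).
    - rewrite (lsum_ext _ _ (fun t => lsum (seq 1 M) (fun m => lsum (seq 1 (2 ^ m)) (fun n =>
          gt t m n * ((U t m n 2%nat - U t m n 1%nat) - (us m n 2%nat - us m n 1%nat)))))).
      + rewrite lsum_swap. apply Req_le, lsum_ext. intros m _. apply lsum_swap.
      + intros t _. rewrite <- lsum_scal. apply lsum_ext. intros m _. rewrite <- lsum_scal. apply lsum_ext.
        intros n _. unfold gt, gtb. ring. }
  apply Rle_trans with (lsum (seq 1 M) (fun _ => 32 * B * gamma * (1 + sqrt Ta))).
  2:{ rewrite lsum_const, length_seq. right; ring. }
  apply lsum_le. intros m Hm. apply in_seq in Hm.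
  apply Rle_trans with (lsum (seq 1 (2 ^ m)) (fun n => 2 * Gbound B gamma m * sqrt (1 + cnt B gamma M NA x y a j (S T) m n))).
  { apply lsum_le. intros n Hn. apply in_seq in Hn. apply block_bound; auto; try lia.
    specialize (Hus m n). apply Rabs_le_between in Hus. lra. }
  rewrite lsum_scal.
  assert (HC : lsum (seq 1 (2 ^ m)) (fun n => cnt B gamma M NA x y a j (S T) m n) <= Ta).
  { unfold cnt. simpl (S T - 1)%nat. rewrite Nat.sub_0_r. rewrite lsum_swap. apply lsum_le. intros s _.
    apply Rle_trans with (lsum (seq 1 (2 ^ m)) (fun n => Defs.ind (inI gamma NA a (x s)) * Defs.ind (inSub gamma NA a m n (x s)))).
    - apply lsum_le. intros n _. unfold actb.
      destruct (classic (inI gamma NA a (x s) /\ active B gamma M NA x y a j s m n)) as [[H1 H2]|H].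
      + rewrite !ind_1; auto. lra. apply (active_inSub B gamma M NA x y a j); auto.
      + rewrite ind_0 by auto. apply Rmult_le_pos; apply ind_bound.
    - rewrite lsum_scal. pose proof (ind_bound (inI gamma NA a (x s))).
      pose proof (sum_inSub_bound gamma NA Hg a m (x s) (fun _ => 1) 1 ltac:(intros; cbv beta; rewrite Rabs_R1; lra) ltac:(lra)).
      apply Rabs_le_between in H0.
      rewrite (lsum_ext _ _ (fun n => 1 * Defs.ind (inSub gamma NA a m n (x s)))) by (intros; ring).
      nra. }
  assert (HS : lsum (seq 1 (2 ^ m)) (fun n => sqrt (1 + cnt B gamma M NA x y a j (S T) m n)) <= 2 ^ m * (1 + sqrt Ta)).
  { eapply Rle_trans. apply lsum_sqrt_le. intros; pose proof (cnt_nonneg B gamma M NA x y a j (S T) m k); lra.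
    rewrite length_seq, INR_pow2, lsum_plus, lsum_const, length_seq, INR_pow2, Rmult_1_r.
    assert (0 <= Ta) by (apply lsum_nonneg; intros; apply ind_bound).
    pose proof (pow2_ge1 m).
    apply Rle_trans with (sqrt (2 ^ m * (2 ^ m + Ta))). apply sqrt_le_1_alt. apply Rmult_le_compat_l; [lra|]. apply Rplus_le_compat_l. exact HC.
    rewrite Rmult_plus_distr_l. eapply Rle_trans. apply sqrt_plus_le; nra.
    rewrite sqrt_square by lra. rewrite sqrt_mult by lra.
    assert (sqrt (2 ^ m) <= 2 ^ m).
    { rewrite <- (sqrt_square (2 ^ m)) at 2 by lra. apply sqrt_le_1_alt. nra. }
    pose proof (sqrt_pos Ta). nra. }
  unfold Gbound. pose proof (powR2_pos m).
  replace (2 * (16 * B * gamma / 2 ^ m) * lsum (seq 1 (2 ^ m)) (fun n => sqrt (1 + cnt B gamma M NA x y a j (S T) m n)))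
    with (32 * B * gamma * (lsum (seq 1 (2 ^ m)) (fun n => sqrt (1 + cnt B gamma M NA x y a j (S T) m n)) / 2 ^ m)) by (field; lra).
  replace (32 * B * gamma * (1 + sqrt Ta)) with (32 * B * gamma * (2 ^ m * (1 + sqrt Ta) / 2 ^ m)) by (field; lra).
  apply Rmult_le_compat_l. nra. unfold Rdiv. apply Rmult_le_compat_r. left; apply Rinv_0_lt_compat; lra. auto. Qed.

End Regret2.

Section ExpConc.
Variables (B yv : R).
Hypothesis HB : 0 < B.
Definition ee := 1 / (32 * B ^ 2).
Definition gq (p : R) := exp (- ee * (yv - p) ^ 2).
Definition gq' (p : R) := 2 * ee * (yv - p) * gq p.
Definition gq'' (p : R) := (4 * ee ^ 2 * (yv - p) ^ 2 - 2 * ee) * gq p.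

Lemma gq_d p : derivable_pt_lim gq p (gq' p).
Proof. apply is_derive_Reals. unfold gq', gq. auto_derive; auto. replace ((yv + - p) * ((yv + - p) * 1)) with ((yv - p)^2) by ring. ring. Qed.
Lemma gq'_d p : derivable_pt_lim gq' p (gq'' p).
Proof. apply is_derive_Reals. unfold gq'', gq', gq. auto_derive; auto. replace ((yv + - p) * ((yv + - p) * 1)) with ((yv - p)^2) by ring. ring. Qed.

Lemma ee_pos : 0 < ee.
Proof. unfold ee. apply Rdiv_lt_0_compat; [lra|]. nra. Qed.

Lemma gq_tangent m z : yv - 4 * B <= m <= yv + 4 * B -> yv - 4 * B <= z <= yv + 4 * B ->
  gq z <= gq m + gq' m * (z - m).
Proof. intros. apply (tangent_concave gq gq' (yv - 4 * B) (yv + 4 * B)); auto.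
  - intros; apply gq_d.
  - intros p q Hp Hpq Hq. apply (deriv_nonpos gq' gq'' (yv - 4 * B) (yv + 4 * B)); auto.
    + intros; apply gq'_d.
    + intros w Hw. unfold gq''. pose proof (exp_pos (- ee * (yv - w) ^ 2)). fold (gq w) in H1.
      assert ((yv - w) ^ 2 <= 16 * B ^ 2) by nra.
      assert (4 * ee ^ 2 * (yv - w) ^ 2 - 2 * ee <= 0).
      { pose proof ee_pos. assert (4 * ee ^ 2 * (yv - w) ^ 2 <= 4 * ee ^ 2 * (16 * B ^ 2)) by nra.
        assert (4 * ee ^ 2 * (16 * B ^ 2) = 2 * ee) by (unfold ee; field; lra). lra. }
      nra. Qed.

Lemma exp_concave (l : list nat) (w f : nat -> R) :
  (forall k, In k l -> 0 <= w k) -> lsum l w = 1 ->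
  (forall k, In k l -> Rabs (yv - f k) <= 4 * B) ->
  lsum l (fun k => w k * gq (f k)) <= gq (lsum l (fun k => w k * f k)).
Proof. intros Hw Hs Hf.
  set (m := lsum l (fun k => w k * f k)).
  assert (Hm : yv - 4 * B <= m <= yv + 4 * B).
  { split.
    - replace (yv - 4 * B) with (lsum l (fun k => w k * (yv - 4 * B))) by (rewrite lsum_scalr, Hs; ring).
      apply lsum_le. intros k Hk. specialize (Hf k Hk). apply Rabs_le_between in Hf. specialize (Hw k Hk). nra.
    - replace (yv + 4 * B) with (lsum l (fun k => w k * (yv + 4 * B))) by (rewrite lsum_scalr, Hs; ring).
      apply lsum_le. intros k Hk. specialize (Hf k Hk). apply Rabs_le_between in Hf. specialize (Hw k Hk). nra. }
  apply Rle_trans with (lsum l (fun k => w k * (gq m + gq' m * (f k - m)))).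
  - apply lsum_le. intros k Hk. apply Rmult_le_compat_l; auto. apply gq_tangent; auto.
    specialize (Hf k Hk). apply Rabs_le_between in Hf. lra.
  - right. rewrite (lsum_ext _ _ (fun k => gq m * w k + gq' m * (w k * f k) - gq' m * m * w k)) by (intros; ring).
    rewrite !lsum_minus, !lsum_plus, !lsum_scal, Hs. fold m. ring. Qed.
End ExpConc.

Section Agg.
Variables (B gamma : R) (M NA NJ : nat) (x y : nat -> R) (T a : nat).
Hypothesis HB : 0 < B.
Hypothesis Hf : forall t j, (1 <= t <= T)%nat -> (j <= NJ)%nat ->
  Rabs (y t - fhat B gamma M NA x y a j t (x t)) <= 4 * B.

Local Notation L := (cumloss B gamma M NA x y a).
Definition Wt (t : nat) := lsum (seq 0 (NJ + 1)) (fun j => exp (- eta_agg B * L j t)).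
Definition lh (t : nat) := Defs.ind (inI gamma NA a (x t)) * (y t - fhat_a B gamma M NA NJ x y a t (x t)) ^ 2.

Lemma eta_agg_ee : eta_agg B = ee B.
Proof. reflexivity. Qed.

Lemma L_S j t : (1 <= t)%nat -> L j (S t) = L j t + Defs.ind (inI gamma NA a (x t)) * (y t - fhat B gamma M NA x y a j t (x t)) ^ 2.
Proof. intros. unfold cumloss. replace (S t - 1)%nat with (S (t - 1)) by lia. rewrite lsum_seq_S.
  replace (1 + (t - 1))%nat with t by lia. reflexivity. Qed.

Lemma lsum_pos_elem l f k : In k l -> (forall i, In i l -> 0 <= f i) -> f k <= lsum l f.
Proof. induction l; simpl; intros Hk Hpos; [contradiction|]. destruct Hk as [<-|Hk].
  - assert (0 <= lsum l f) by (apply lsum_nonneg; auto). lra.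
  - assert (0 <= f a0) by auto. specialize (IHl Hk (fun i Hi => Hpos i (or_intror Hi))). lra. Qed.

Lemma Wt_pos t : 0 < Wt t.
Proof. unfold Wt. apply Rlt_le_trans with (exp (- eta_agg B * L 0%nat t)). apply exp_pos.
  apply (lsum_pos_elem _ (fun j => exp (- eta_agg B * L j t)) 0%nat). apply in_seq; lia. intros; left; apply exp_pos. Qed.

Lemma what_sum t : lsum (seq 0 (NJ + 1)) (fun j => what B gamma M NA NJ x y a j t) = 1.
Proof. unfold what. rewrite (lsum_ext _ _ (fun j => / Wt t * exp (- eta_agg B * L j t))).
  rewrite lsum_scal. fold (Wt t). pose proof (Wt_pos t). field. lra.
  intros; unfold Rdiv; fold (Wt t); ring. Qed.

Lemma W_step t : (1 <= t <= T)%nat -> Wt (S t) <= Wt t * exp (- eta_agg B * lh t).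
Proof. intros Ht. unfold lh.
  destruct (classic (inI gamma NA a (x t))) as [HI|HI].
  - rewrite ind_1 by auto. rewrite Rmult_1_l.
    unfold Wt. rewrite (lsum_ext _ _ (fun j => Wt t * (what B gamma M NA NJ x y a j t * gq B (y t) (fhat B gamma M NA x y a j t (x t))))).
    + rewrite lsum_scal. apply Rmult_le_compat_l. left; apply Wt_pos.
      unfold fhat_a. apply (exp_concave B (y t) HB). intros; unfold what; apply Rlt_le, Rdiv_lt_0_compat; [apply exp_pos| apply Wt_pos].
      apply what_sum. intros k Hk. apply Hf; auto. apply in_seq in Hk; lia.
    + intros j _. rewrite L_S by lia. rewrite ind_1 by auto. unfold what, gq. fold (Wt t). rewrite eta_agg_ee.
      pose proof (Wt_pos t). field_simplify; [|lra]. rewrite <- exp_plus. f_equal. ring.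
  - rewrite ind_0 by auto. rewrite Rmult_0_l, Rmult_0_r, exp_0, Rmult_1_r.
    unfold Wt. right. apply lsum_ext. intros j _. rewrite L_S by lia. rewrite ind_0 by auto. f_equal. ring. Qed.

Lemma W_iter K : (K <= T)%nat -> Wt (S K) <= Wt 1%nat * exp (- eta_agg B * lsum (seq 1 K) lh).
Proof. induction K; intros HK.
  - simpl. rewrite Rmult_0_r, exp_0. lra.
  - rewrite lsum_seq_S. replace (1 + K)%nat with (S K) by lia.
    eapply Rle_trans. apply W_step; lia.
    replace (- eta_agg B * (lsum (seq 1 K) lh + lh (S K))) with (- eta_agg B * lsum (seq 1 K) lh + - eta_agg B * lh (S K)) by ring.
    rewrite exp_plus. rewrite <- Rmult_assoc. apply Rmult_le_compat_r. left; apply exp_pos. apply IHK; lia. Qed.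

Lemma W_1 : Wt 1%nat = INR NJ + 1.
Proof. unfold Wt. rewrite (lsum_ext _ _ (fun _ => 1)). rewrite lsum_const, length_seq, plus_INR. simpl. ring.
  intros j _. unfold cumloss. simpl. rewrite Rmult_0_r, exp_0. reflexivity. Qed.

Lemma agg_bound j0 : (j0 <= NJ)%nat ->
  lsum (seq 1 T) lh <= L j0 (S T) + ln (INR NJ + 1) / eta_agg B.
Proof. intros Hj0.
  assert (H1 : exp (- eta_agg B * L j0 (S T)) <= Wt (S T)).
  { unfold Wt. apply (lsum_pos_elem _ (fun j => exp (- eta_agg B * L j (S T))) j0). apply in_seq; lia. intros; left; apply exp_pos. }
  pose proof (W_iter T (le_n _)). rewrite W_1 in H.
  assert (Hn : 0 < INR NJ + 1) by (pose proof (pos_INR NJ); lra).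
  assert (exp (- eta_agg B * L j0 (S T)) <= (INR NJ + 1) * exp (- eta_agg B * lsum (seq 1 T) lh)) by lra.
  apply ln_le in H0; [|apply exp_pos]. rewrite ln_exp, ln_mult, ln_exp in H0 by (auto; apply exp_pos).
  pose proof (ee_pos B HB). rewrite <- eta_agg_ee in H2.
  apply Rmult_le_reg_l with (eta_agg B); auto.
  replace (eta_agg B * (L j0 (S T) + ln (INR NJ + 1) / eta_agg B)) with (eta_agg B * L j0 (S T) + ln (INR NJ + 1)) by (field; lra).
  lra. Qed.

End Agg.

Lemma half_a k : ((2*k+1)/2 = k)%nat.
Proof. symmetry. apply (Nat.div_unique _ _ _ 1); lia. Qed.
Lemma half_b k : ((2*k+1+1)/2 = k+1)%nat.
Proof. symmetry. apply (Nat.div_unique _ _ _ 0); lia. Qed.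

Lemma near_nat (N : nat) (r : R) : 0 <= r <= INR N -> exists j, (j <= N)%nat /\ Rabs (r - INR j) <= 1/2.
Proof. induction N; intros Hr.
  - exists 0%nat. split; auto. simpl in *. rewrite Rabs_le_between. lra.
  - rewrite S_INR in Hr. destruct (Rle_dec r (INR N)) as [H|H].
    + destruct (IHN ltac:(lra)) as [j [Hj1 Hj2]]. exists j. split; auto.
    + destruct (Rle_dec r (INR N + 1/2)).
      * exists N. split; auto. apply Rabs_le_between. lra.
      * exists (S N). split; auto. rewrite S_INR. apply Rabs_le_between. lra. Qed.

Definition clamp (r : R) := Rmax (-1) (Rmin 1 r).
Lemma clamp_bound r : Rabs (clamp r) <= 1.
Proof. unfold clamp. apply Rabs_le. split. apply Rmax_l. apply Rmax_lub; [lra|apply Rmin_l]. Qed.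
Lemma clamp_id r : Rabs r <= 1 -> clamp r = r.
Proof. intros H. apply Rabs_le_between in H. unfold clamp. rewrite Rmin_right by lra. rewrite Rmax_right; lra. Qed.

Section Chain.
Variables (B gamma : R) (M NA : nat) (f : R -> R) (a j0 : nat).
Hypothesis Hg : 0 < gamma.
Hypothesis HNA : INR NA * gamma = 1.
Hypothesis Ha : (1 <= a <= NA)%nat.
Hypothesis Hlip : forall u v, 0 <= u <= 1 -> 0 <= v <= 1 -> Rabs (f u - f v) <= Rabs (u - v).

Definition Lf := (INR a - 1) * gamma.
Definition cen (m n : nat) := Lf + (INR n - 1/2) * (gamma / 2 ^ m).
Definition base := - B + INR j0 * gamma.
Hypothesis Hbase : Rabs (f (cen 0 1) - base) <= gamma / 2.

Definition dd (m n : nat) := if Nat.eqb m 1 then (f (cen 1 n) - base) / coefm gamma 1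
   else (f (cen m n) - f (cen (m - 1) ((n + 1) / 2))) / coefm gamma m.
Definition us : point := fun m n i => if Nat.eqb i 2 then (1 + clamp (dd m n)) / 2 else (1 - clamp (dd m n)) / 2.

Lemma us_diff m n : us m n 2%nat - us m n 1%nat = clamp (dd m n).
Proof. unfold us. simpl. field. Qed.

Lemma us_bound m n : Rabs (us m n 2%nat - us m n 1%nat) <= 1.
Proof. rewrite us_diff. apply clamp_bound. Qed.

Lemma inSub_iff m n z : inSub gamma NA a m n z <-> inI gamma NA a z /\ Lf + (INR n - 1) * (gamma / 2 ^ m) <= z /\
   (z < Lf + INR n * (gamma / 2 ^ m) \/ (n = (2 ^ m)%nat /\ z = Lf + INR n * (gamma / 2 ^ m))).
Proof. unfold inSub, Lf. assert (R1 : forall r, r * gamma / 2 ^ m = r * (gamma / 2 ^ m)) by (intros; unfold Rdiv; ring).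
  rewrite !R1. tauto. Qed.

Lemma inSub_cen m n z : inSub gamma NA a m n z -> Rabs (z - cen m n) <= gamma / 2 ^ m / 2.
Proof. intros H. apply inSub_iff in H. destruct H as [_ [H1 H2]]. unfold cen. apply Rabs_le_between.
  assert (0 < gamma / 2 ^ m) by (apply Rdiv_lt_0_compat; auto; apply powR2_pos). destruct H2 as [H2|[_ H2]]; lra. Qed.

Lemma cen_in m n : (1 <= n <= 2 ^ m)%nat -> 0 <= cen m n <= 1.
Proof. intros Hn. unfold cen, Lf.
  assert (Hw : 0 < gamma / 2 ^ m) by (apply Rdiv_lt_0_compat; auto; apply powR2_pos).
  assert (1 <= INR n) by (apply (le_INR 1); lia).
  assert (INR n <= 2 ^ m) by (rewrite <- INR_pow2; apply le_INR; lia).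
  assert (E : 2 ^ m * (gamma / 2 ^ m) = gamma) by (field; apply Rgt_not_eq, powR2_pos).
  assert (1 <= INR a) by (apply (le_INR 1); lia). assert (INR a <= INR NA) by (apply le_INR; lia).
  split; nra. Qed.

Lemma parent m n z : (1 <= n <= 2 ^ S m)%nat -> inSub gamma NA a (S m) n z ->
  (1 <= (n + 1) / 2 <= 2 ^ m)%nat /\ inSub gamma NA a m ((n + 1) / 2) z /\
  Rabs (cen (S m) n - cen m ((n + 1) / 2)) <= gamma / 2 ^ S m / 2.
Proof. intros Hn H. rewrite Nat.pow_succ_r' in Hn.
  assert (E2 : gamma / 2 ^ m = 2 * (gamma / 2 ^ S m)) by (simpl; field; apply Rgt_not_eq, powR2_pos).
  assert (Hw : 0 < gamma / 2 ^ S m) by (apply Rdiv_lt_0_compat; auto; apply powR2_pos).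
  apply inSub_iff in H. destruct H as [HI [H1 H2]].
  destruct (Nat.Even_or_Odd n) as [[k Hk]|[k Hk]]; subst n.
  - replace (2 * k + 1)%nat with (2 * k + 1)%nat by lia. rewrite half_a.
    split; [lia|]. rewrite mult_INR in *. simpl (INR 2) in *. split.
    + apply inSub_iff. split; auto. rewrite E2. split; [lra|].
      destruct H2 as [H2|[H2a H2b]]; [left; lra|right; split; [rewrite Nat.pow_succ_r' in H2a; lia|lra]].
    + unfold cen. rewrite mult_INR, E2. simpl (INR 2). apply Rabs_le_between. lra.
  - replace (2 * k + 1 + 1)%nat with (2 * k + 1 + 1)%nat by lia. rewrite half_b.
    split. { destruct H2 as [H2|[H2a H2b]]; [|rewrite Nat.pow_succ_r' in H2a; lia]. lia. }
    rewrite plus_INR, mult_INR in *. simpl (INR 2) in *. simpl (INR 1) in *. split.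
    + apply inSub_iff. split; auto. rewrite E2, plus_INR. simpl (INR 1). split; [lra|].
      destruct H2 as [H2|[H2a H2b]]; [left; lra|rewrite Nat.pow_succ_r' in H2a; lia].
    + unfold cen. rewrite !plus_INR, !mult_INR, E2. simpl (INR 2). simpl (INR 1). apply Rabs_le_between. lra. Qed.

Lemma dd_bound m n z : (1 <= m)%nat -> (1 <= n <= 2 ^ m)%nat -> inSub gamma NA a m n z -> Rabs (dd m n) <= 1.
Proof. intros Hm Hn H. destruct m as [|m]; [lia|].
  destruct (parent m n z Hn H) as [Hp [Hq Hc]].
  pose proof (cen_in (S m) n Hn) as C1. pose proof (cen_in m _ Hp) as C2.
  pose proof (Hlip _ _ C1 C2) as HL.
  unfold dd. destruct (Nat.eqb_spec (S m) 1) as [E|E].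
  - injection E as E; subst m. unfold coefm. simpl pow in *. assert (Ep : ((n+1)/2)%nat = 1%nat) by (destruct Hp as [Hp1 Hp2]; simpl in Hp2; apply Nat.le_antisymm; auto). rewrite Ep in *.
    rewrite Rdiv_1_r. unfold Rdiv. rewrite Rabs_mult, Rabs_inv, (Rabs_pos_eq gamma) by lra.
    apply Rmult_le_reg_r with gamma; auto. rewrite Rmult_assoc, Rinv_l, Rmult_1_r, Rmult_1_l by lra.
    assert (Rabs (f (cen 1 n) - base) <= Rabs (f (cen 1 n) - f (cen 0 1)) + Rabs (f (cen 0 1) - base)).
    { replace (f (cen 1 n) - base) with ((f (cen 1 n) - f (cen 0 1)) + (f (cen 0 1) - base)) by ring. apply Rabs_triang. }
    lra.
  - replace (S m - 1)%nat with m by lia. unfold coefm. replace (S m - 1)%nat with m by lia.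
    assert (Hw : 0 < gamma / 2 ^ m) by (apply Rdiv_lt_0_compat; auto; apply powR2_pos).
    assert (E2 : gamma / 2 ^ S m / 2 <= gamma / 2 ^ m) by (simpl; unfold Rdiv; rewrite !Rinv_mult; pose proof (powR2_pos m);
       assert (0 < / 2 ^ m) by (apply Rinv_0_lt_compat; lra); nra).
    unfold Rdiv at 1. rewrite Rabs_mult, Rabs_inv, (Rabs_pos_eq (gamma / 2 ^ m)) by lra.
    apply Rmult_le_reg_r with (gamma / 2 ^ m); auto. rewrite Rmult_assoc, Rinv_l, Rmult_1_r, Rmult_1_l by lra.
    lra. Qed.

Lemma blk_us m z n : (1 <= n <= 2 ^ m)%nat -> inSub gamma NA a m n z ->
  blk gamma NA us a m z = clamp (dd m n) * coefm gamma m.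
Proof. intros Hn H. unfold blk. rewrite (lsum_single _ _ n). rewrite ind_1 by auto. rewrite us_diff. ring.
  apply seq_NoDup. apply in_seq; lia. intros k Hk Hkn. rewrite ind_0; [ring|]. intro. apply Hkn.
  apply in_seq in Hk. apply (inSub_unique gamma NA Hg a m k n z); auto; lia. Qed.

Lemma tele z K : inI gamma NA a z -> (1 <= K)%nat ->
  exists n, (1 <= n <= 2 ^ K)%nat /\ inSub gamma NA a K n z /\
  lsum (seq 1 K) (fun m => blk gamma NA us a m z) = f (cen K n) - base.
Proof. intros HI HK. destruct K as [|K]; [lia|]. clear HK. induction K.
  - destruct (inSub_exists gamma NA Hg HNA a z ltac:(lia) HI 1) as [n [Hn HS]]. exists n. split; auto. split; auto.
    simpl. rewrite (blk_us 1 z n Hn HS). rewrite clamp_id by (apply (dd_bound 1 n z); auto).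
    unfold dd. simpl. unfold coefm. simpl. field. lra.
  - destruct IHK as [n [Hn [HS Hsum]]].
    destruct (inSub_exists gamma NA Hg HNA a z ltac:(lia) HI (S (S K))) as [n' [Hn' HS']].
    destruct (parent (S K) n' z Hn' HS') as [Hp [Hq _]].
    assert (Epar : ((n' + 1) / 2)%nat = n) by (apply (inSub_unique gamma NA Hg a (S K) _ n z); auto).
    exists n'. split; auto. split; auto.
    rewrite lsum_seq_S, Hsum. replace (1 + S K)%nat with (S (S K)) by lia.
    rewrite (blk_us (S (S K)) z n' Hn' HS'). rewrite clamp_id by (apply (dd_bound (S (S K)) n' z); auto; lia).
    unfold dd. replace (Nat.eqb (S (S K)) 1) with false by reflexivity. replace (S (S K) - 1)%nat with (S K) by lia.
    rewrite Epar. field. apply Rgt_not_eq, coefm_pos; auto. Qed.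

Lemma chain_approx z : inI gamma NA a z -> (1 <= M)%nat -> 0 <= z <= 1 ->
  Rabs (fpar B gamma M NA j0 us a z - f z) <= gamma / 2 ^ M / 2.
Proof. intros HI HM Hz. rewrite fpar_alt. destruct (tele z M HI HM) as [n [Hn [HS Hsum]]].
  rewrite Hsum. unfold base. replace (- B + INR j0 * gamma + (f (cen M n) - (- B + INR j0 * gamma)) - f z) with (f (cen M n) - f z) by ring.
  eapply Rle_trans. apply Hlip; auto. apply cen_in; auto. rewrite Rabs_minus_sym. apply inSub_cen; auto. Qed.

End Chain.

Section Parts.
Variables (gamma : R) (NA : nat).
Hypothesis Hg : 0 < gamma.
Hypothesis HNA : INR NA * gamma = 1.

Lemma exists_a_aux z N : 0 <= z -> z < INR N * gamma -> exists a, (1 <= a <= N)%nat /\ (INR a - 1) * gamma <= z < INR a * gamma.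
Proof. intros H0. induction N; intros H.
  - simpl in H. lra.
  - destruct (Rlt_dec z (INR N * gamma)) as [Hl|Hl].
    + destruct (IHN Hl) as [a [Ha1 Ha2]]. exists a. split; auto; lia.
    + exists (S N). split; [lia|]. rewrite S_INR in *. lra. Qed.

Lemma exists_a z : 0 <= z <= 1 -> exists a, (1 <= a <= NA)%nat /\ inI gamma NA a z.
Proof. intros Hz. destruct (Req_dec z 1) as [E|E].
  - exists NA. split; [|right; auto]. destruct NA; [simpl in HNA; lra|lia].
  - destruct (exists_a_aux z NA ltac:(lra) ltac:(lra)) as [a [Ha Hb]]. exists a. split; auto. left; auto. Qed.

Lemma unique_a a a' z : (1 <= a <= NA)%nat -> (1 <= a' <= NA)%nat -> inI gamma NA a z -> inI gamma NA a' z -> a = a'.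
Proof.
  assert (Hgen : forall p q, (p < q <= NA)%nat -> inI gamma NA p z -> inI gamma NA q z -> False).
  { intros p q Hpq Hp Hq. assert (INR p + 1 <= INR q) by (rewrite <- S_INR; apply le_INR; lia).
    assert (INR q <= INR NA) by (apply le_INR; lia).
    destruct Hp as [[Hp1 Hp2]|[Hp1 Hp2]]; destruct Hq as [[Hq1 Hq2]|[Hq1 Hq2]]; try lia.
    - nra.
    - subst. nra. }
  intros Ha Ha' H H'. destruct (Nat.lt_trichotomy a a') as [Hl|[Hl|Hl]]; auto.
  - exfalso; apply (Hgen a a'); auto; lia.
  - exfalso; apply (Hgen a' a); auto; lia. Qed.

Lemma sum_a z : 0 <= z <= 1 -> exists a0, (1 <= a0 <= NA)%nat /\ inI gamma NA a0 z /\
  forall F : nat -> R, lsum (seq 1 NA) (fun a => Defs.ind (inI gamma NA a z) * F a) = F a0.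
Proof. intros Hz. destruct (exists_a z Hz) as [a0 [Ha0 HI]]. exists a0. split; auto. split; auto.
  intros F. rewrite (lsum_single _ _ a0). rewrite ind_1 by auto; ring. apply seq_NoDup. apply in_seq; lia.
  intros k Hk Hkn. rewrite ind_0; [ring|]. intro. apply Hkn. apply in_seq in Hk. apply (unique_a k a0 z); auto; lia. Qed.

End Parts.

Section Core.
Variables (B gamma : R) (M NA NJ T : nat) (x y : nat -> R) (f : R -> R).
Hypothesis HB : 0 < B.
Hypothesis Hg : 0 < gamma.
Hypothesis HgB : gamma <= B.
Hypothesis HNA : INR NA * gamma = 1.
Hypothesis HNJ : INR NJ * gamma = 2 * B.
Hypothesis HT : (1 <= T)%nat.
Hypothesis HM : (1 <= M)%nat.
Hypothesis Heps : gamma / 2 ^ M <= B / INR T.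
Hypothesis Hx : forall t, (1 <= t <= T)%nat -> 0 <= x t <= 1.
Hypothesis Hy : forall t, (1 <= t <= T)%nat -> Rabs (y t) <= B.
Hypothesis Hfb : forall u, 0 <= u <= 1 -> - B <= f u <= B.
Hypothesis Hlip : forall u v, 0 <= u <= 1 -> 0 <= v <= 1 -> Rabs (f u - f v) <= Rabs (u - v).

Lemma fhat_y a j t : (1 <= t <= T)%nat -> (j <= NJ)%nat -> Rabs (y t - fhat B gamma M NA x y a j t (x t)) <= 4 * B.
Proof. intros Ht Hj. pose proof (fhat_bound B gamma M NA x y Hg a j t (x t)).
  assert (0 <= INR j * gamma <= 2 * B). { split. apply Rmult_le_pos; [apply pos_INR|lra].
    rewrite <- HNJ. apply Rmult_le_compat_r; [lra|apply le_INR; auto]. }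
  pose proof (Hy t Ht). apply Rabs_le_between in H. apply Rabs_le_between in H1. apply Rabs_le_between. lra. Qed.

Definition IA a t := Defs.ind (inI gamma NA a (x t)).

Lemma per_a a : (1 <= a <= NA)%nat ->
  lsum (seq 1 T) (fun t => IA a t * ((y t - fhat_a B gamma M NA NJ x y a t (x t)) ^ 2 - (y t - f (x t)) ^ 2))
  <= 32 * B ^ 2 * ln (INR NJ + 1) + 32 * B * gamma * INR M * (1 + sqrt (Ta gamma NA x T a))
     + lsum (seq 1 T) (fun t => IA a t * (3 * B ^ 2 / INR T)).
Proof. intros Ha.
  set (c0 := cen gamma a 0 1).
  assert (Hc0 : 0 <= c0 <= 1).
  { unfold c0, cen, Lf. simpl. assert (1 <= INR a) by (apply (le_INR 1); lia). assert (INR a <= INR NA) by (apply le_INR; lia). nra. }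
  destruct (near_nat NJ ((f c0 + B) / gamma)) as [j0 [Hj0 Hj0']].
  { specialize (Hfb c0 Hc0). split. apply Rdiv_le_0_compat; lra.
    apply Rmult_le_reg_r with gamma; auto. unfold Rdiv. rewrite Rmult_assoc, Rinv_l by lra. lra. }
  assert (Hbase : Rabs (f c0 - base B gamma j0) <= gamma / 2).
  { unfold base. replace (f c0 - (- B + INR j0 * gamma)) with (gamma * ((f c0 + B) / gamma - INR j0)) by (field; lra).
    rewrite Rabs_mult, Rabs_pos_eq by lra. apply Rmult_le_reg_r with (/gamma). apply Rinv_0_lt_compat; auto.
    replace (gamma / 2 * / gamma) with (1/2) by (field; lra). replace (gamma * Rabs ((f c0 + B) / gamma - INR j0) * / gamma) with (Rabs ((f c0 + B) / gamma - INR j0)) by (field; lra). auto. }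
  set (U := us B gamma f a j0).
  assert (Hj : 0 <= INR j0 * gamma <= 2 * B). { split. apply Rmult_le_pos; [apply pos_INR|lra].
    rewrite <- HNJ. apply Rmult_le_compat_r; [lra|apply le_INR; auto]. }
  pose proof (aj_regret B gamma M NA x y T Hg HgB Hy HT a j0 Hj U (us_bound B gamma f a j0)) as HR.
  pose proof (agg_bound B gamma M NA NJ x y T a HB (fun t j Ht Hj => fhat_y a j t Ht Hj) j0 Hj0) as HA.
  assert (Heta : ln (INR NJ + 1) / eta_agg B = 32 * B ^ 2 * ln (INR NJ + 1)) by (unfold eta_agg; field; lra).
  rewrite Heta in HA. unfold cumloss in HA. replace (S T - 1)%nat with T in HA by lia.
  assert (Happ : lsum (seq 1 T) (fun t => IA a t * ((y t - fpar B gamma M NA j0 U a (x t)) ^ 2 - (y t - f (x t)) ^ 2))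
     <= lsum (seq 1 T) (fun t => IA a t * (3 * B ^ 2 / INR T))).
  { apply lsum_le. intros t Ht. apply in_seq in Ht. unfold IA.
    destruct (classic (inI gamma NA a (x t))) as [HI|HI]; [|rewrite ind_0 by auto; lra].
    rewrite ind_1 by auto. rewrite !Rmult_1_l.
    pose proof (chain_approx B gamma M NA f a j0 Hg HNA Ha Hlip Hbase (x t) HI HM (Hx t ltac:(lia))) as HC.
    set (P := fpar B gamma M NA j0 U a (x t)) in *.
    assert (HTp : 0 < INR T) by (apply (lt_INR 0); lia).
    assert (Hep : Rabs (P - f (x t)) <= B / (2 * INR T)).
    { eapply Rle_trans; [apply HC|]. replace (B / (2 * INR T)) with (B / INR T / 2) by (field; lra). lra. }
    assert (B / (2 * INR T) <= B / 2). { apply Rmult_le_compat_l; [lra|]. apply Rinv_le_contravar; [lra|].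
      assert (1 <= INR T) by (apply (le_INR 1); lia). lra. }
    pose proof (Hy t ltac:(lia)). pose proof (Hfb (x t) (Hx t ltac:(lia))).
    replace ((y t - P) ^ 2 - (y t - f (x t)) ^ 2) with ((f (x t) - P) * (2 * (y t - f (x t)) + (f (x t) - P))) by ring.
    apply Rle_trans with (Rabs ((f (x t) - P) * (2 * (y t - f (x t)) + (f (x t) - P)))). apply Rle_abs.
    rewrite Rabs_mult. rewrite Rabs_minus_sym in Hep.
    assert (Rabs (2 * (y t - f (x t)) + (f (x t) - P)) <= 5 * B).
    { eapply Rle_trans. apply Rabs_triang. rewrite Rabs_mult, (Rabs_pos_eq 2) by lra.
      assert (Rabs (y t - f (x t)) <= 2 * B). { eapply Rle_trans. apply Rabs_triang. rewrite Rabs_Ropp. assert (Rabs (f (x t)) <= B) by (apply Rabs_le; lra). lra. }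
      lra. }
    apply Rle_trans with (B / (2 * INR T) * (5 * B)). apply Rmult_le_compat; auto; apply Rabs_pos.
    replace (B / (2 * INR T) * (5 * B)) with (5 / 2 * (B ^ 2 / INR T)) by (field; lra).
    replace (3 * B ^ 2 / INR T) with (3 * (B ^ 2 / INR T)) by (field; lra).
    assert (0 <= B ^ 2 / INR T) by (apply Rdiv_le_0_compat; nra). lra. }
  assert (E : lsum (seq 1 T) (fun t => IA a t * ((y t - fhat_a B gamma M NA NJ x y a t (x t)) ^ 2 - (y t - f (x t)) ^ 2)) =
    lsum (seq 1 T) (lh B gamma M NA NJ x y a) - lsum (seq 1 T) (fun s => Defs.ind (inI gamma NA a (x s)) * (y s - fhat B gamma M NA x y a j0 s (x s)) ^ 2)
    + lsum (seq 1 T) (fun t => IA a t * ((y t - fpar B gamma M NA j0 (uhat B gamma M NA x y a j0 t) a (x t)) ^ 2 - (y t - fpar B gamma M NA j0 U a (x t)) ^ 2))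
    + lsum (seq 1 T) (fun t => IA a t * ((y t - fpar B gamma M NA j0 U a (x t)) ^ 2 - (y t - f (x t)) ^ 2))).
  { rewrite <- !lsum_minus, <- !lsum_plus. apply lsum_ext. intros t _. unfold lh, IA, fhat. ring. }
  rewrite E. unfold IA in *. lra. Qed.

End Core.

Section Core2.
Variables (B gamma : R) (M NA NJ T : nat) (x y : nat -> R) (f : R -> R).
Hypothesis HB : 0 < B.
Hypothesis Hg : 0 < gamma.
Hypothesis HgB : gamma <= B.
Hypothesis HNA : INR NA * gamma = 1.
Hypothesis HNJ : INR NJ * gamma = 2 * B.
Hypothesis HT : (1 <= T)%nat.
Hypothesis HM : (1 <= M)%nat.
Hypothesis Heps : gamma / 2 ^ M <= B / INR T.
Hypothesis Hx : forall t, (1 <= t <= T)%nat -> 0 <= x t <= 1.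
Hypothesis Hy : forall t, (1 <= t <= T)%nat -> Rabs (y t) <= B.
Hypothesis Hfb : forall u, 0 <= u <= 1 -> - B <= f u <= B.
Hypothesis Hlip : forall u v, 0 <= u <= 1 -> 0 <= v <= 1 -> Rabs (f u - f v) <= Rabs (u - v).

Lemma core_total :
  lsum (seq 1 T) (fun t => (y t - yhat B gamma M NA NJ x y t) ^ 2) - lsum (seq 1 T) (fun t => (y t - f (x t)) ^ 2)
  <= INR NA * (32 * B ^ 2 * ln (INR NJ + 1)) + 32 * B * gamma * INR M * (INR NA + sqrt (INR NA * INR T)) + 3 * B ^ 2.
Proof.
  assert (HTp : 0 < INR T) by (apply (lt_INR 0); lia).
  assert (HsumA : forall t, (1 <= t <= T)%nat -> lsum (seq 1 NA) (fun a => IA gamma NA x a t) = 1).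
  { intros t Ht. destruct (sum_a gamma NA Hg HNA (x t) (Hx t Ht)) as [a0 [_ [HI HF]]].
    unfold IA. rewrite (lsum_ext _ _ (fun a => Defs.ind (inI gamma NA a (x t)) * 1)) by (intros; ring).
    rewrite HF. reflexivity. }
  rewrite <- lsum_minus.
  rewrite (lsum_ext _ _ (fun t => lsum (seq 1 NA) (fun a => IA gamma NA x a t * ((y t - fhat_a B gamma M NA NJ x y a t (x t)) ^ 2 - (y t - f (x t)) ^ 2)))).
  2:{ intros t Ht. apply in_seq in Ht. destruct (sum_a gamma NA Hg HNA (x t) (Hx t ltac:(lia))) as [a0 [_ [HI HF]]].
      unfold IA. rewrite HF. unfold yhat.
      rewrite (lsum_ext _ _ (fun a => Defs.ind (inI gamma NA a (x t)) * fhat_a B gamma M NA NJ x y a t (x t))) by (intros; ring).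
      rewrite HF. reflexivity. }
  rewrite lsum_swap.
  eapply Rle_trans. apply lsum_le. intros a Ha. apply in_seq in Ha. apply (per_a B gamma M NA NJ T x y f); auto; lia.
  rewrite !lsum_plus, !lsum_const, length_seq.
  rewrite (lsum_ext _ _ (fun a => 32 * B * gamma * INR M * 1 + 32 * B * gamma * INR M * sqrt (Ta gamma NA x T a))) by (intros; ring).
  rewrite lsum_plus, lsum_const, length_seq, lsum_scal.
  assert (HT2 : lsum (seq 1 NA) (fun a => lsum (seq 1 T) (fun t => IA gamma NA x a t * (3 * B ^ 2 / INR T))) = 3 * B ^ 2).
  { rewrite lsum_swap. rewrite (lsum_ext _ _ (fun t => 3 * B ^ 2 / INR T)).
    rewrite lsum_const, length_seq. field. lra.
    intros t Ht. apply in_seq in Ht. rewrite lsum_scalr, HsumA by lia. ring. }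
  rewrite HT2.
  assert (HS : lsum (seq 1 NA) (fun a => sqrt (Ta gamma NA x T a)) <= sqrt (INR NA * INR T)).
  { eapply Rle_trans. apply lsum_sqrt_le. intros; apply lsum_nonneg; intros; apply ind_bound.
    rewrite length_seq. apply sqrt_le_1_alt. apply Rmult_le_compat_l. apply pos_INR.
    unfold Ta. rewrite lsum_swap. right. rewrite (lsum_ext _ _ (fun _ => 1)). rewrite lsum_const, length_seq. ring.
    intros t Ht. apply in_seq in Ht. apply HsumA. lia. }
  assert (0 <= 32 * B * gamma * INR M) by (apply Rmult_le_pos; [nra|apply pos_INR]).
  nra. Qed.

End Core2.

Lemma exp_mono x y : x <= y -> exp x <= exp y.
Proof. intros [H|H]. left; apply exp_increasing; auto. subst; lra. Qed.

Lemma arith_final (B tau L NAr NJr Mr g sq : R) :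
  0 < B -> 1 <= tau -> / 2 < L -> 0 < g ->
  NAr * g = 1 -> g = B / tau -> ln (NJr + 1) <= 3 * L -> 0 <= Mr -> Mr <= 4 * L ->
  g * sq = tau * sqrt B -> 0 <= sq ->
  NAr * (32 * B ^ 2 * ln (NJr + 1)) + 32 * B * g * Mr * (NAr + sq) + 3 * B ^ 2
  <= 400 * Rmax B (B ^ 2) * tau * L.
Proof. intros HB Ht HL Hg HNA Hgd Hln HM0 HM Hsq Hsq0.
  set (K := Rmax B (B ^ 2)).
  assert (K1 : B <= K) by apply Rmax_l. assert (K2 : B ^ 2 <= K) by apply Rmax_r.
  assert (K3 : B * sqrt B <= K).
  { destruct (Rle_dec B 1).
    - assert (sqrt B <= 1) by (rewrite <- sqrt_1; apply sqrt_le_1_alt; lra). pose proof (sqrt_pos B). nra.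
    - assert (sqrt B <= B). { rewrite <- (sqrt_square B) at 2 by lra. apply sqrt_le_1_alt. nra. }
      pose proof (sqrt_pos B). simpl in K2. nra. }
  assert (E1 : NAr * B = tau). { rewrite Hgd in HNA. replace (NAr * B) with (NAr * (B / tau) * tau) by (field; lra).
    rewrite HNA. ring. }
  assert (T1 : NAr * (32 * B ^ 2 * ln (NJr + 1)) <= 96 * K * tau * L).
  { replace (NAr * (32 * B ^ 2 * ln (NJr + 1))) with (32 * (NAr * B) * B * ln (NJr + 1)) by ring. rewrite E1.
    assert (0 <= tau * B) by nra. assert (tau * B * ln (NJr + 1) <= tau * B * (3 * L)) by (apply Rmult_le_compat_l; auto).
    assert (tau * L * B <= tau * L * K) by (apply Rmult_le_compat_l; nra). nra. }
  assert (T2 : 32 * B * g * Mr * (NAr + sq) <= 256 * K * tau * L).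
  { replace (32 * B * g * Mr * (NAr + sq)) with (32 * B * Mr * (NAr * g + g * sq)) by ring.
    rewrite HNA, Hsq.
    assert (0 <= B * Mr) by nra.
    assert (B * Mr * (1 + tau * sqrt B) <= B * (4 * L) * (1 + tau * sqrt B)).
    { apply Rmult_le_compat_r. pose proof (sqrt_pos B); nra. apply Rmult_le_compat_l; lra. }
    assert (B * (1 + tau * sqrt B) <= 2 * tau * K).
    { assert (B <= tau * K) by nra. assert (tau * (B * sqrt B) <= tau * K) by (apply Rmult_le_compat_l; lra). nra. }
    assert (0 <= L) by lra. nra. }
  assert (T3 : 3 * B ^ 2 <= 6 * K * tau * L).
  { assert (B ^ 2 <= K * tau) by nra. assert (0 <= B ^ 2) by nra. assert (1 <= 2 * L) by lra. nra. }
  assert (0 <= K * tau * L) by (apply Rmult_le_pos; [apply Rmult_le_pos|]; lra). lra. Qed.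

Theorem theorem6 :
  exists c : R, 0 < c /\
  forall (B : R) (T : nat) (x y : nat -> R) (M NA NJ : nat),
    0 < B -> (2 <= T)%nat ->
    (forall t, (1 <= t <= T)%nat -> 0 <= x t <= 1) ->
    (forall t, (1 <= t <= T)%nat -> Rabs (y t) <= B) ->
    INR NA = 1 / (B * Rpower (INR T) (- (1 / 3))) ->
    INR NJ = 2 * B / (B * Rpower (INR T) (- (1 / 3))) ->
    INR M - 1 < ln (B * Rpower (INR T) (- (1 / 3)) * INR T / B) / ln 2 <= INR M ->
    forall f : R -> R,
      (forall u, 0 <= u <= 1 -> - B <= f u <= B) ->
      (forall u v, 0 <= u <= 1 -> 0 <= v <= 1 -> Rabs (f u - f v) <= Rabs (u - v)) ->
      lsum (seq 1 T) (fun t =>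
          (y t - yhat B (B * Rpower (INR T) (- (1 / 3))) M NA NJ x y t) ^ 2)
      - lsum (seq 1 T) (fun t => (y t - f (x t)) ^ 2)
      <= c * Rmax B (B ^ 2) * Rpower (INR T) (1 / 3) * ln (INR T).
Proof.
  exists 400. split; [lra|].
  intros B T x y M NA NJ HB HT Hx Hy HNA HNJ HMc f Hfb Hlip.
  assert (HTr : 2 <= INR T) by (apply (le_INR 2); lia).
  set (L := ln (INR T)).
  assert (Hln2 : / 2 < ln 2) by apply ln_lt_2.
  assert (HL : ln 2 <= L) by (apply ln_le; lra).
  set (tau := exp (1 / 3 * L)).
  assert (Etau : Rpower (INR T) (1 / 3) = tau) by reflexivity.
  assert (Etau' : Rpower (INR T) (- (1 / 3)) = / tau).
  { unfold Rpower. fold L. unfold tau. rewrite <- exp_Ropp. f_equal. ring. }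
  rewrite Etau', Etau. fold L.
  rewrite Etau' in HNA, HNJ, HMc.
  set (g := B * / tau) in *.
  assert (Ht1 : 1 <= tau). { unfold tau. apply Rle_trans with (exp 0); [rewrite exp_0; lra|apply exp_mono; lra]. }
  assert (Ht3 : tau * tau * tau = INR T).
  { unfold tau. rewrite <- !exp_plus. replace (1 / 3 * L + 1 / 3 * L + 1 / 3 * L) with L by field. unfold L. apply exp_ln. lra. }
  assert (Hg : 0 < g) by (unfold g; apply Rmult_lt_0_compat; [lra|apply Rinv_0_lt_compat; lra]).
  assert (Hgd : g = B / tau) by reflexivity.
  assert (HgB : g <= B). { unfold g. rewrite <- (Rmult_1_r B) at 2. apply Rmult_le_compat_l; [lra|].
    rewrite <- Rinv_1. apply Rinv_le_contravar; lra. }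
  assert (HNA' : INR NA * g = 1) by (rewrite HNA; field; lra).
  assert (HNJ' : INR NJ * g = 2 * B) by (rewrite HNJ; field; lra).
  assert (Elog : ln (g * INR T / B) = 2 / 3 * L).
  { replace (g * INR T / B) with (tau * tau) by (rewrite <- Ht3; unfold g; field; lra).
    unfold tau. rewrite <- exp_plus, ln_exp. field. }
  rewrite Elog in HMc.
  assert (HM : (1 <= M)%nat).
  { destruct M; [|lia]. exfalso. simpl in HMc. destruct HMc as [_ H].
    assert (0 < 2 / 3 * L / ln 2) by (apply Rdiv_lt_0_compat; lra). lra. }
  assert (HMl : 2 / 3 * L <= INR M * ln 2).
  { destruct HMc as [_ H]. apply Rmult_le_reg_r with (/ ln 2). apply Rinv_0_lt_compat; lra.
    replace (INR M * ln 2 * / ln 2) with (INR M) by (field; lra). exact H. }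
  assert (Heps : g / 2 ^ M <= B / INR T).
  { assert (E2 : 2 ^ M = exp (INR M * ln 2)) by (rewrite <- Rpower_pow by lra; reflexivity).
    assert (tau * tau <= 2 ^ M). { rewrite E2. unfold tau. rewrite <- exp_plus. apply exp_mono. lra. }
    rewrite <- Ht3. unfold g. assert (0 < tau * tau) by nra.
    unfold Rdiv. rewrite Rmult_assoc. apply Rmult_le_compat_l; [lra|].
    replace (/ (tau * tau * tau)) with (/ tau * / (tau * tau)) by (field; lra).
    apply Rmult_le_compat_l. left; apply Rinv_0_lt_compat; lra. apply Rinv_le_contravar; lra. }
  eapply Rle_trans.
  { apply (core_total B g M NA NJ T x y f); auto; lia. }
  apply arith_final; auto.
  - lra.
  -
    assert (ENJ : INR NJ = 2 * tau). { apply Rmult_eq_reg_r with g; [|lra]. rewrite HNJ'. unfold g. field. lra. }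
    rewrite ENJ. apply Rle_trans with (ln (3 * tau)). apply ln_le; lra.
    rewrite ln_mult by lra. unfold tau. rewrite ln_exp.
    assert (ln 3 <= 2 * ln 2). { replace (2 * ln 2) with (ln (2 * 2)) by (rewrite ln_mult; lra). apply ln_le; lra. }
    lra.
  - apply pos_INR.
  - destruct HMc as [H _].
    assert (L / ln 2 <= 2 * L). { apply Rmult_le_reg_r with (ln 2). lra. unfold Rdiv. rewrite Rmult_assoc, Rinv_l by lra. nra. }
    assert (1 <= L / ln 2). { apply Rmult_le_reg_r with (ln 2). lra. unfold Rdiv. rewrite Rmult_assoc, Rinv_l by lra. lra. }
    replace (2 / 3 * L / ln 2) with (2 / 3 * (L / ln 2)) in H by (field; lra). lra.
  -
    rewrite <- (sqrt_square g) at 1 by lra. rewrite <- sqrt_mult; [|nra|apply Rmult_le_pos; [apply pos_INR|lra]].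
    replace (g * g * (INR NA * INR T)) with (B * (tau * tau)).
    rewrite sqrt_mult by nra. rewrite sqrt_square by lra. ring.
    rewrite <- Ht3. replace (g * g * (INR NA * (tau * tau * tau))) with ((INR NA * g) * g * (tau * tau * tau)) by ring.
    rewrite HNA'. unfold g. field. lra.
  - apply sqrt_pos.
Qed.
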